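(* Let $n$ be a positive integer. A UC-move is realized by a sequence of $V(n)$-moves and welded Reidemeister moves. Hence the $V(n)$-move is an unknotting operation for welded knots, i.e., every welded knot is $V(n)$-equivalent to the unknot.
   Context: A virtual link diagram is the image of an immersion of finitely many ordered, oriented circles in the plane whose double points are transverse and each is either a classical crossing (with over/under information) or a virtual crossing. Welded Reidemeister moves are: the classical Reidemeister moves R1–R3; the virtual moves VR1–VR3 (Reidemeister moves with all crossings virtual) and VR4 (a strand with only virtual crossings slides past a classical crossing); and the OC move (a strand passing over two other strands at two classical crossings, those two strands crossing each other at a virtual crossing, may be slid across that virtual crossing). A welded link (knot if one component) is an equivalence class of diagrams under welded Reidemeister moves. The UC move is the same as OC with ''over'' replaced by ''under''. The $V(n)$-move: inside a disk the diagram consists of two arcs oriented in the same direction; on one side the arcs twist around each other through $n$ consecutive classical crossings forming a two-strand twist (the $2$-braid $\sigma^n$, all crossings of the same sign); on the other side the arcs, with the same four endpoints, cross once at a single virtual crossing; the move replaces one side by the other. Two welded links are $V(n)$-equivalent if diagrams of them are related by $V(n)$-moves and welded Reidemeister moves. *)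

(* Defs.v *)
(* Welded links are encoded by Gauss diagrams. *)
From mathcomp Require Import all_boot.
From Stdlib Require Export Relations.
Set Implicit Arguments. Unset Strict Implicit. Unset Printing Implicit Defensive.

(* A letter of a Gauss word: (crossing label, is-over-endpoint, sign (true = +)).
   A diagram is a list of (cyclic) Gauss words, one per circle. *)
Definition letter := (nat * bool * bool)%type.
Definition gauss := seq (seq letter).
Definition lid (l : letter) : nat := l.1.1.
Definition lover (l : letter) : bool := l.1.2.
Definition lsign (l : letter) : bool := l.2.
Definition ids (D : gauss) : seq nat := map lid (flatten D).
Definition fresh (c : nat) (D : gauss) : bool := c \notin ids D.

Definition wf_gauss (D : gauss) : Prop :=
  forall c, c \in ids D ->
    [/\ count (fun l => (lid l == c) && lover l) (flatten D) = 1,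
        count (fun l => (lid l == c) && ~~ lover l) (flatten D) = 1 &
        forall l1 l2, l1 \in flatten D -> l2 \in flatten D ->
          lid l1 = c -> lid l2 = c -> lsign l1 = lsign l2].

Definition unknot : gauss := [:: [::]].

(* Two segments s1, s2 placed in a diagram: on one circle, or on two circles
   (other circles R; placement anywhere is reached by rotation/permutation). *)
Definition fill2 (sh : bool) (s1 s2 w1 w2 : seq letter) (R : gauss) : gauss :=
  if sh then (s1 ++ w1 ++ s2 ++ w2) :: R else (s1 ++ w1) :: (s2 ++ w2) :: R.

Definition fill3 (sh : nat) (s1 s2 s3 w1 w2 w3 : seq letter) (R : gauss) : gauss :=
  match sh with
  | 0 => (s1 ++ w1 ++ s2 ++ w2 ++ s3 ++ w3) :: R
  | 1 => (s1 ++ w1 ++ s3 ++ w2 ++ s2 ++ w3) :: R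
  | 2 => (s1 ++ w1 ++ s2 ++ w2) :: (s3 ++ w3) :: R
  | 3 => (s1 ++ w1 ++ s3 ++ w2) :: (s2 ++ w3) :: R
  | 4 => (s2 ++ w1 ++ s3 ++ w2) :: (s1 ++ w3) :: R
  | _ => (s1 ++ w1) :: (s2 ++ w2) :: (s3 ++ w3) :: R
  end.

(* Reidemeister III on a triangle of strands T (top), M (middle), B (bottom);
   chords x = T over M, y = T over B, z = M over B.  Parameters: ccw = the
   counterclockwise cyclic order of the triangle's edges is (T,M,B) (else
   (T,B,M)); aX = strand X is oriented along the counterclockwise boundary. *)
Definition r3T (ccw aT aM aB : bool) (x y z : nat) : seq letter :=
  let sx := if ccw then aT == aM else aT != aM in
  let sy := if ccw then aB != aT else aT == aB in
  if aT == ccw then [:: (y, true, sy); (x, true, sx)]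
  else [:: (x, true, sx); (y, true, sy)].
Definition r3M (ccw aT aM aB : bool) (x y z : nat) : seq letter :=
  let sx := if ccw then aT == aM else aT != aM in
  let sz := if ccw then aM == aB else aB != aM in
  if aM == ccw then [:: (x, false, sx); (z, true, sz)]
  else [:: (z, true, sz); (x, false, sx)].
Definition r3B (ccw aT aM aB : bool) (x y z : nat) : seq letter :=
  let sy := if ccw then aB != aT else aT == aB in
  let sz := if ccw then aM == aB else aB != aM in
  if aB == ccw then [:: (z, false, sz); (y, false, sy)]
  else [:: (y, false, sy); (z, false, sz)].

(* Welded Reidemeister moves on Gauss diagrams (virtual moves are invisible). *)
Inductive welded_step : gauss -> gauss -> Prop :=
| ws_rot w R k : welded_step (w :: R) (rot k w :: R)
| ws_perm D D' : perm_eq D D' -> welded_step D D'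
| ws_relabel D (f : nat -> nat) : injective f ->
    welded_step D (map (map (fun l => (f (lid l), lover l, lsign l))) D)
| ws_R1 w R c o e : fresh c (w :: R) ->
    welded_step (w :: R) (([:: (c, o, e); (c, ~~ o, e)] ++ w) :: R)
| ws_R2 sh w1 w2 R c d e q : c != d ->
    fresh c (fill2 sh [::] [::] w1 w2 R) -> fresh d (fill2 sh [::] [::] w1 w2 R) ->
    welded_step (fill2 sh [::] [::] w1 w2 R)
      (fill2 sh [:: (c, true, e); (d, true, ~~ e)]
         (if q then [:: (c, false, e); (d, false, ~~ e)]
          else [:: (d, false, ~~ e); (c, false, e)]) w1 w2 R)
| ws_R3 sh w1 w2 w3 R x y z ccw aT aM aB : uniq [:: x; y; z] ->
    welded_step
      (fill3 sh (r3T ccw aT aM aB x y z) (r3M ccw aT aM aB x y z)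
         (r3B ccw aT aM aB x y z) w1 w2 w3 R)
      (fill3 sh (rev (r3T ccw aT aM aB x y z)) (rev (r3M ccw aT aM aB x y z))
         (rev (r3B ccw aT aM aB x y z)) w1 w2 w3 R)
| ws_OC a b w R : lover a -> lover b ->
    welded_step ((a :: b :: w) :: R) ((b :: a :: w) :: R).

Definition UC_step (D D' : gauss) : Prop :=
  exists a b w R, [/\ ~~ lover a, ~~ lover b,
    D = (a :: b :: w) :: R & D' = (b :: a :: w) :: R].

(* The two strands of the twist sigma^n (all crossings of sign e): the strand
   entering at the bottom-left / bottom-right of the disk. *)
Definition twA (cs : seq nat) (e : bool) : seq letter :=
  [seq (nth 0 cs i, ~~ odd i, e) | i <- iota 0 (size cs)].
Definition twB (cs : seq nat) (e : bool) : seq letter :=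
  [seq (nth 0 cs i, odd i, e) | i <- iota 0 (size cs)].

(* V(n)-move: left side = single virtual crossing, right side = twist. *)
Inductive Vn_step (n : nat) : gauss -> gauss -> Prop :=
| vn_odd sh w1 w2 R cs e : size cs = n -> odd n -> uniq cs ->
    all (fun c => fresh c (fill2 sh [::] [::] w1 w2 R)) cs ->
    Vn_step n (fill2 sh [::] [::] w1 w2 R) (fill2 sh (twA cs e) (twB cs e) w1 w2 R)
| vn_even1 a b R cs e : size cs = n -> ~~ odd n -> uniq cs ->
    all (fun c => fresh c (a :: b :: R)) cs ->
    Vn_step n (a :: b :: R) ((twA cs e ++ a ++ twB cs e ++ b) :: R)
| vn_even2 a b R cs e : size cs = n -> ~~ odd n -> uniq cs ->
    all (fun c => fresh c ((a ++ b) :: R)) cs ->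
    Vn_step n ((a ++ b) :: R) ((twA cs e ++ a) :: (twB cs e ++ b) :: R).

Definition Vn_equiv (n : nat) : relation gauss :=
  clos_refl_sym_trans gauss (fun D D' => welded_step D D' \/ Vn_step n D D').

(* Main.v *)
Require Import Defs.
From mathcomp Require Import all_boot zify.
Set Implicit Arguments. Unset Strict Implicit. Unset Printing Implicit Defensive.

Lemma E_refl n D : Vn_equiv n D D.
Proof. exact: rst_refl. Qed.
Lemma E_sym n D D' : Vn_equiv n D D' -> Vn_equiv n D' D.
Proof. exact: rst_sym. Qed.
Lemma E_trans n D1 D2 D3 : Vn_equiv n D1 D2 -> Vn_equiv n D2 D3 -> Vn_equiv n D1 D3.
Proof. exact: rst_trans. Qed.
Lemma E_ws n D D' : welded_step D D' -> Vn_equiv n D D'.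
Proof. by move=> h; apply: rst_step; left. Qed.
Lemma E_vn n D D' : Vn_step n D D' -> Vn_equiv n D D'.
Proof. by move=> h; apply: rst_step; right. Qed.

Definition isoS (D D' : gauss) : Prop :=
  (exists w R k, D = w :: R /\ D' = rot k w :: R) \/ perm_eq D D'.
Definition iso := clos_refl_sym_trans gauss isoS.

Lemma iso_refl D : iso D D. Proof. exact: rst_refl. Qed.
Lemma iso_sym D D' : iso D D' -> iso D' D. Proof. exact: rst_sym. Qed.
Lemma iso_trans D1 D2 D3 : iso D1 D2 -> iso D2 D3 -> iso D1 D3.
Proof. exact: rst_trans. Qed.

Lemma iso_E n D D' : iso D D' -> Vn_equiv n D D'.
Proof.
elim=> {D D'} [D D' [[w [R [k [-> ->]]]]|h]| D | D D' _ ih | D1 D2 D3 _ i1 _ i2].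
- by apply: E_ws; apply: ws_rot.
- by apply: E_ws; apply: ws_perm.
- exact: E_refl.
- exact: E_sym.
- exact: E_trans i1 i2.
Qed.

Lemma iso_perm_flat D D' : iso D D' -> perm_eq (flatten D) (flatten D').
Proof.
elim=> {D D'} [D D' [[w [R [k [-> ->]]]]|h]| D | D D' _ ih | D1 D2 D3 _ i1 _ i2].
- by rewrite /= perm_cat2r perm_sym perm_rot.
- exact: perm_flatten.
- exact: perm_refl.
- by rewrite perm_sym.
- exact: perm_trans i1 i2.
Qed.

Lemma iso_permD D D' : perm_eq D D' -> iso D D'.
Proof. by move=> h; apply: rst_step; right. Qed.

Lemma iso_rot w R k : iso (w :: R) (rot k w :: R).
Proof. by apply: rst_step; left; exists w, R, k. Qed.

Lemma perm_sw2 (T : eqType) (a b : T) s : perm_eq (a :: b :: s) (b :: a :: s).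
Proof. have h := perm_catCA [:: a] [:: b] s; rewrite /= in h; by rewrite h. Qed.

Lemma iso_cons w R R' : iso R R' -> iso (w :: R) (w :: R').
Proof.
elim=> {R R'} [R R' [[w' [R0 [k [-> ->]]]]|h]| R | R R' _ ih | R1 R2 R3 _ i1 _ i2].
- apply: (iso_trans (iso_permD (perm_sw2 w w' R0))); apply: (iso_trans (iso_rot _ _ k)).
  by apply: iso_permD; exact: perm_sw2.
- by apply: iso_permD; rewrite perm_cons.
- exact: iso_refl.
- exact: iso_sym.
- exact: iso_trans i1 i2.
Qed.

Lemma iso_catr X Y R : iso X Y -> iso (X ++ R) (Y ++ R).
Proof.
move=> h; elim: h R => {X Y} [X Y [[w0 [R0 [k [-> ->]]]]|h0]| X | X Y _ ih | X1 X2 X3 _ i1 _ i2] R1.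
- exact: iso_rot.
- by apply: iso_permD; rewrite perm_cat2r.
- exact: iso_refl.
- exact: iso_sym.
- exact: iso_trans (i1 R1) (i2 R1).
Qed.

Lemma iso_catl D R R' : iso R R' -> iso (D ++ R) (D ++ R').
Proof. by move=> h; elim: D => [|w D ih] //=; exact: iso_cons. Qed.

Lemma iso_consr w w' R : iso [:: w] [:: w'] -> iso (w :: R) (w' :: R).
Proof. by move/(iso_catr R). Qed.

Lemma iso_app D1 D2 R1 R2 : iso D1 D2 -> iso R1 R2 -> iso (D1 ++ R1) (D2 ++ R2).
Proof. move=> h1 h2; apply: (iso_trans (iso_catr R1 h1)); exact: iso_catl. Qed.

Definition interp (env : seq (seq letter)) (c : seq nat) : seq letter :=
  flatten [seq nth [::] env i | i <- c].
Definition idiag env (ds : seq (seq nat)) (R : gauss) : gauss :=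
  [seq interp env c | c <- ds] ++ R.

Definition rotb (c d : seq nat) := has (fun k => rot k c == d) (iota 0 (size c).+1).
Definition rem_at (i : nat) (ds : seq (seq nat)) := take i ds ++ drop i.+1 ds.
Fixpoint isoB (cs ds : seq (seq nat)) : bool :=
  match cs with
  | [::] => ds == [::]
  | c :: cs' => let i := find (rotb c) ds in (i < size ds) && isoB cs' (rem_at i ds)
  end.

Lemma interp_rot env c k : iso [:: interp env c] [:: interp env (rot k c)].
Proof.
rewrite /interp /rot -{1}[c](cat_take_drop k) !map_cat !flatten_cat.
have := iso_rot (flatten [seq nth [::] env i | i <- take k c] ++ flatten [seq nth [::] env i | i <- drop k c]) [::] (size (flatten [seq nth [::] env i | i <- take k c])).
by rewrite rot_size_cat.
Qed.
Lemma interp_rot' env c k : 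
  let x := interp env c in let y := interp env (rot k c) in iso [:: x] [:: y].
Proof. exact: interp_rot. Qed.

Lemma isoB_sound env cs ds R : isoB cs ds -> iso (idiag env cs R) (idiag env ds R).
Proof.
elim: cs ds => [|c cs ih] ds /=; first by move/eqP->; exact: iso_refl.
set i := find _ _; move=> /andP[hi /ih {}ih].
have hd : rotb c (nth [::] ds i) by apply: nth_find; rewrite has_find.
move: hd => /hasP[k _ /eqP hk].
have -> : ds = take i ds ++ nth [::] ds i :: drop i.+1 ds.
  by rewrite -drop_nth // cat_take_drop.
rewrite /idiag /= map_cat /=.
apply: (@iso_trans _ (interp env (nth [::] ds i) :: idiag env (rem_at i ds) R)).
  apply: (@iso_trans _ (interp env c :: idiag env (rem_at i ds) R)).
    exact: iso_cons.
  by apply: iso_consr; rewrite -hk; exact: interp_rot.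
apply: iso_permD; rewrite /idiag /rem_at map_cat -!catA /=.
set A := [seq interp env c0 | c0 <- take i ds].
set B := [seq interp env c0 | c0 <- drop i.+1 ds] ++ R.
have h := perm_catCA [:: interp env (nth [::] ds i)] A B; rewrite /= in h.
by rewrite h.
Qed.

Lemma isoB_iso env cs ds R X Y :
  isoB cs ds -> X = idiag env cs R -> Y = idiag env ds R -> iso X Y.
Proof. by move=> h -> ->; exact: isoB_sound. Qed.

Ltac lookup a env :=
  lazymatch env with
  | a :: _ => constr:(0)
  | _ :: ?r => let k := lookup a r in constr:(S k)
  end.
Ltac reify_seq env t :=
  lazymatch t with
  | ?a ++ ?b => let ra := reify_seq env a in let rb := reify_seq env b in constr:(ra ++ rb)
  | [::] => constr:(@nil nat)
  | ?a => let i := lookup a env in constr:([:: i])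
  end.
Ltac reify_diag env R t :=
  lazymatch t with
  | R => constr:(@nil (seq nat))
  | ?c :: ?ds => let rc := reify_seq env c in let rds := reify_diag env R ds in constr:(rc :: rds)
  | [::] => constr:(@nil (seq nat))
  end.
Ltac iso_solve env R :=
  rewrite /idiag /interp /= ?cats0;
  lazymatch goal with
  | |- iso ?X ?Y =>
    let cx := reify_diag env R X in let cy := reify_diag env R Y in
    apply: (@isoB_iso env cx cy R X Y);
    [ by vm_compute
    | rewrite /idiag /interp /= ?cats0 ?catA //
    | rewrite /idiag /interp /= ?cats0 ?catA // ]
  end.

Goal forall (a b c : seq letter) R, iso ((a ++ b ++ c) :: R) ((c ++ a ++ b) :: R).
Proof. move=> a b c R. iso_solve [:: a; b; c] R. Qed.

Definition shape (sg : nat) : seq (seq nat) :=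
  match sg with
  | 0 => [:: [:: 0; 1; 2; 3; 4; 5]]
  | 1 => [:: [:: 0; 1; 4; 5; 2; 3]]
  | 2 => [:: [:: 0; 1; 2; 3]; [:: 4; 5]]
  | 3 => [:: [:: 0; 1; 4; 5]; [:: 2; 3]]
  | 4 => [:: [:: 0; 1]; [:: 2; 3; 4; 5]]
  | _ => [:: [:: 0; 1]; [:: 2; 3]; [:: 4; 5]]
  end.

Definition F sg (s1 s2 s3 w1 w2 w3 : seq letter) (R : gauss) : gauss :=
  idiag [:: s1; w1; s2; w2; s3; w3] (shape sg) R.

Definition freshL (L : seq nat) (D : gauss) := forall c, c \in L -> c \notin ids D.

Definition Move n (L : seq nat) (s1 s2 s3 t1 t2 t3 : seq letter) :=
  forall sg w1 w2 w3 R, freshL L [:: w1, w2, w3 & R] ->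
    Vn_equiv n (F sg s1 s2 s3 w1 w2 w3 R) (F sg t1 t2 t3 w1 w2 w3 R).

Ltac mem_solve :=
  let x := fresh "x" in
  move=> x; rewrite /= ?mem_cat ?cats0 ?in_nil;
  repeat match goal with |- context [x \in ?a] => case: (x \in a) end; by [].

Lemma freshL_sub L D D1 D2 : freshL L D1 -> freshL L D2 ->
  {subset flatten D <= flatten D1 ++ flatten D2} -> freshL L D.
Proof.
move=> h1 h2 hs c hc; apply/negP; rewrite /ids => /mapP[x hx ex].
move: (hs x hx); rewrite mem_cat => /orP[] hx'.
- by move: (h1 c hc); rewrite /ids ex map_f.
- by move: (h2 c hc); rewrite /ids ex map_f.
Qed.

Lemma freshL_sub1 L D D1 : freshL L D1 -> {subset flatten D <= flatten D1} -> freshL L D.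
Proof.
move=> h1 hs; apply: (freshL_sub h1 (D2 := [::])) => //.
by move=> x hx; rewrite cats0; exact: hs.
Qed.

Lemma Move_refl n L s1 s2 s3 : Move n L s1 s2 s3 s1 s2 s3.
Proof. by move=> sg w1 w2 w3 R _; exact: E_refl. Qed.
Lemma Move_sym n L s1 s2 s3 t1 t2 t3 :
  Move n L s1 s2 s3 t1 t2 t3 -> Move n L t1 t2 t3 s1 s2 s3.
Proof. by move=> h sg w1 w2 w3 R hf; apply: E_sym; apply: h. Qed.
Lemma Move_trans n L s1 s2 s3 t1 t2 t3 u1 u2 u3 :
  Move n L s1 s2 s3 t1 t2 t3 -> Move n L t1 t2 t3 u1 u2 u3 -> Move n L s1 s2 s3 u1 u2 u3.
Proof. by move=> h1 h2 sg w1 w2 w3 R hf; exact: E_trans (h1 _ _ _ _ _ hf) (h2 _ _ _ _ _ hf). Qed.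
Lemma Move_weak n L L' s1 s2 s3 t1 t2 t3 : {subset L <= L'} ->
  Move n L s1 s2 s3 t1 t2 t3 -> Move n L' s1 s2 s3 t1 t2 t3.
Proof. by move=> hs h sg w1 w2 w3 R hf; apply: h => c /hs; exact: hf. Qed.

Lemma Move_tr n L L' s1 s2 s3 t1 t2 t3 s1' s2' s3' t1' t2' t3' :
  Move n L s1 s2 s3 t1 t2 t3 ->
  (forall sg w1 w2 w3 R, freshL L' [:: w1, w2, w3 & R] ->
     exists sg' w1' w2' w3' R', [/\ freshL L [:: w1', w2', w3' & R'],
       iso (F sg s1' s2' s3' w1 w2 w3 R) (F sg' s1 s2 s3 w1' w2' w3' R') &
       iso (F sg t1' t2' t3' w1 w2 w3 R) (F sg' t1 t2 t3 w1' w2' w3' R')]) ->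
  Move n L' s1' s2' s3' t1' t2' t3'.
Proof.
move=> h ht sg w1 w2 w3 R hf.
have [sg' [w1' [w2' [w3' [R' [hf' i1 i2]]]]]] := ht sg w1 w2 w3 R hf.
apply: (E_trans (iso_E n i1)); apply: E_trans (E_sym (iso_E n i2)).
exact: h.
Qed.

Lemma Move_tr_uni n L L' (f : seq letter -> seq letter -> seq letter -> (seq letter * seq letter * seq letter))
  s1 s2 s3 t1 t2 t3 :
  Move n L s1 s2 s3 t1 t2 t3 ->
  (forall sg w1 w2 w3 R, freshL L' [:: w1, w2, w3 & R] ->
     exists sg' w1' w2' w3' R', freshL L [:: w1', w2', w3' & R'] /\
       forall a b c, iso (F sg (f a b c).1.1 (f a b c).1.2 (f a b c).2 w1 w2 w3 R) (F sg' a b c w1' w2' w3' R')) ->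
  Move n L' (f s1 s2 s3).1.1 (f s1 s2 s3).1.2 (f s1 s2 s3).2 (f t1 t2 t3).1.1 (f t1 t2 t3).1.2 (f t1 t2 t3).2.
Proof.
move=> h ht; apply: (Move_tr h) => sg w1 w2 w3 R hf.
have [sg' [w1' [w2' [w3' [R' [hf' hi]]]]]] := ht sg w1 w2 w3 R hf.
by exists sg', w1', w2', w3', R'; split.
Qed.

Definition sw12 sg := match sg with 0 => 1 | 1 => 0 | 2 => 2 | 3 => 4 | 4 => 3 | _ => 5 end.
Definition sw23 sg := match sg with 0 => 1 | 1 => 0 | 2 => 3 | 3 => 2 | 4 => 4 | _ => 5 end.

Lemma Move_swap12 n L s1 s2 s3 t1 t2 t3 :
  Move n L s1 s2 s3 t1 t2 t3 -> Move n L s2 s1 s3 t2 t1 t3.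
Proof.
move=> h; apply: (Move_tr_uni (f := fun a b c => (b, a, c)) h) => sg w1 w2 w3 R hf.
exists (sw12 sg), w2, w1, w3, R; split.
  by apply: (@freshL_sub1 _ _ _ hf); mem_solve.
move=> a b c; case: sg {hf} => [|[|[|[|[|sg]]]]] /=; rewrite /F /=.
all: iso_solve [:: b; w1; a; w2; c; w3] R.
Qed.

Lemma Move_swap23 n L s1 s2 s3 t1 t2 t3 :
  Move n L s1 s2 s3 t1 t2 t3 -> Move n L s1 s3 s2 t1 t3 t2.
Proof.
move=> h; apply: (Move_tr_uni (f := fun a b c => (a, c, b)) h) => sg w1 w2 w3 R hf.
exists (sw23 sg), w1, w3, w2, R; split.
  by apply: (@freshL_sub1 _ _ _ hf); mem_solve.
move=> a b c; case: sg {hf} => [|[|[|[|[|sg]]]]] /=; rewrite /F /=.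
all: iso_solve [:: a; w1; c; w2; b; w3] R.
Qed.

Lemma Move_suf n L s1 s2 s3 t1 t2 t3 v1 v2 v3 :
  Move n L s1 s2 s3 t1 t2 t3 -> freshL L [:: v1; v2; v3] ->
  Move n L (s1 ++ v1) (s2 ++ v2) (s3 ++ v3) (t1 ++ v1) (t2 ++ v2) (t3 ++ v3).
Proof.
move=> h hv; apply: (Move_tr_uni (f := fun a b c => (a ++ v1, b ++ v2, c ++ v3)) h).
move=> sg w1 w2 w3 R hf.
exists sg, (v1 ++ w1), (v2 ++ w2), (v3 ++ w3), R; split.
  by apply: (freshL_sub hf hv); mem_solve.
move=> a b c; case: sg {hf} => [|[|[|[|[|sg]]]]] /=; rewrite /F /=.
all: iso_solve [:: a; v1; w1; b; v2; w2; c; v3; w3] R.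
Qed.

Lemma Move_pre1 n L s1 s2 s3 t1 t2 t3 u :
  Move n L s1 s2 s3 t1 t2 t3 -> freshL L [:: u] ->
  Move n L (u ++ s1) s2 s3 (u ++ t1) t2 t3.
Proof.
move=> h hu; apply: (Move_tr_uni (f := fun a b c => (u ++ a, b, c)) h).
move=> sg w1 w2 w3 R hf.
have hA : forall x y z : seq letter, {subset flatten [:: x, y, z & R] <= flatten [:: w1, w2, w3 & R] ++ flatten [:: u]} -> 
   freshL L [:: x, y, z & R] by move=> x y z; exact: freshL_sub hf hu.
case: sg => [|[|[|[|[|sg]]]]].
- exists 0, w1, w2, (w3 ++ u), R; split; first by apply: hA; mem_solve.
  by move=> a b c; rewrite /F /=; iso_solve [:: u; a; w1; b; w2; c; w3] R.
- exists 1, w1, (w2 ++ u), w3, R; split; first by apply: hA; mem_solve.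
  by move=> a b c; rewrite /F /=; iso_solve [:: u; a; w1; b; w2; c; w3] R.
- exists 2, w1, (w2 ++ u), w3, R; split; first by apply: hA; mem_solve.
  by move=> a b c; rewrite /F /=; iso_solve [:: u; a; w1; b; w2; c; w3] R.
- exists 3, w1, w2, (w3 ++ u), R; split; first by apply: hA; mem_solve.
  by move=> a b c; rewrite /F /=; iso_solve [:: u; a; w1; b; w2; c; w3] R.
- exists 4, (w1 ++ u), w2, w3, R; split; first by apply: hA; mem_solve.
  by move=> a b c; rewrite /F /=; iso_solve [:: u; a; w1; b; w2; c; w3] R.
- exists 5, (w1 ++ u), w2, w3, R; split; first by apply: hA; mem_solve.
  by move=> a b c; rewrite /F /=; iso_solve [:: u; a; w1; b; w2; c; w3] R.
Qed.

Lemma Move_pre2 n L s1 s2 s3 t1 t2 t3 u :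
  Move n L s1 s2 s3 t1 t2 t3 -> freshL L [:: u] ->
  Move n L s1 (u ++ s2) s3 t1 (u ++ t2) t3.
Proof. by move=> h hu; apply: Move_swap12; apply: Move_pre1 => //; apply: Move_swap12. Qed.

Lemma Move_pre3 n L s1 s2 s3 t1 t2 t3 u :
  Move n L s1 s2 s3 t1 t2 t3 -> freshL L [:: u] ->
  Move n L s1 s2 (u ++ s3) t1 t2 (u ++ t3).
Proof. by move=> h hu; apply: Move_swap23; apply: Move_pre2 => //; apply: Move_swap23. Qed.

Lemma freshL_cat L D1 D2 : freshL L D1 -> freshL L D2 -> freshL L (D1 ++ D2).
Proof. by move=> h1 h2; apply: (freshL_sub h1 h2); rewrite flatten_cat. Qed.

Lemma Move_emb n L s1 s2 s3 t1 t2 t3 u1 v1 u2 v2 u3 v3 :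
  Move n L s1 s2 s3 t1 t2 t3 -> freshL L [:: u1; v1; u2; v2; u3; v3] ->
  Move n L (u1 ++ s1 ++ v1) (u2 ++ s2 ++ v2) (u3 ++ s3 ++ v3)
           (u1 ++ t1 ++ v1) (u2 ++ t2 ++ v2) (u3 ++ t3 ++ v3).
Proof.
move=> h hf.
have hs : forall x, x \in [:: u1; v1; u2; v2; u3; v3] -> freshL L [:: x].
  move=> x hx; apply: (@freshL_sub1 _ _ _ hf) => y hy.
  by apply/flattenP; exists x => //; move: hy; rewrite /= cats0.
apply: Move_pre1; last by apply: hs; rewrite !inE eqxx.
apply: Move_pre2; last by apply: hs; rewrite !inE eqxx !orbT.
apply: Move_pre3; last by apply: hs; rewrite !inE eqxx !orbT.
apply: Move_suf => //; apply: (@freshL_sub1 _ _ _ hf); mem_solve.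
Qed.

Lemma E_iso n X Y X' Y' : iso X X' -> iso Y Y' -> Vn_equiv n X' Y' -> Vn_equiv n X Y.
Proof.
move=> h1 h2 h; apply: (E_trans (iso_E n h1)); apply: (E_trans h); exact: E_sym (iso_E n h2).
Qed.

Lemma F_fill3 sg w1 w2 w3 R : exists sh w1' w2' w3' R', forall a b c,
  iso (F sg a b c w1 w2 w3 R) (fill3 sh a b c w1' w2' w3' R').
Proof.
case: sg => [|[|[|[|[|sg]]]]].
- by exists 0, w1, w2, w3, R => a b c; rewrite /F /=; iso_solve [:: a; w1; b; w2; c; w3] R.
- by exists 1, w1, w3, w2, R => a b c; rewrite /F /=; iso_solve [:: a; w1; b; w2; c; w3] R.
- by exists 2, w1, w2, w3, R => a b c; rewrite /F /=; iso_solve [:: a; w1; b; w2; c; w3] R.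
- by exists 3, w1, w3, w2, R => a b c; rewrite /F /=; iso_solve [:: a; w1; b; w2; c; w3] R.
- by exists 4, w2, w3, w1, R => a b c; rewrite /F /=; iso_solve [:: a; w1; b; w2; c; w3] R.
- by exists 5, w1, w2, w3, R => a b c; rewrite /F /=; iso_solve [:: a; w1; b; w2; c; w3] R.
Qed.

Lemma Move_fill3 n L s1 s2 s3 t1 t2 t3 :
  (forall sh w1 w2 w3 R, Vn_equiv n (fill3 sh s1 s2 s3 w1 w2 w3 R) (fill3 sh t1 t2 t3 w1 w2 w3 R)) ->
  Move n L s1 s2 s3 t1 t2 t3.
Proof.
move=> h sg w1 w2 w3 R _.
have [sh [w1' [w2' [w3' [R' hi]]]]] := F_fill3 sg w1 w2 w3 R.
exact: E_iso (hi _ _ _) (hi _ _ _) (h _ _ _ _ _).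
Qed.

Lemma Move_fill2 n L s1 s2 t1 t2 :
  (forall sh w1 w2 R, freshL L [:: w1, w2 & R] ->
     Vn_equiv n (fill2 sh s1 s2 w1 w2 R) (fill2 sh t1 t2 w1 w2 R)) ->
  Move n L s1 s2 [::] t1 t2 [::].
Proof.
move=> h sg w1 w2 w3 R hf.
have hA : forall x y R', {subset flatten [:: x, y & R'] <= flatten [:: w1, w2, w3 & R]} -> 
   freshL L [:: x, y & R'] by move=> x y R' hs; exact: freshL_sub1 hf hs.
case: sg => [|[|[|[|[|sg]]]]].
- apply: (@E_iso _ _ _ (fill2 true s1 s2 w1 (w2 ++ w3) R) (fill2 true t1 t2 w1 (w2 ++ w3) R)).
  + by rewrite /F /fill2 /=; iso_solve [:: s1; w1; s2; w2; w3] R.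
  + by rewrite /F /fill2 /=; iso_solve [:: t1; w1; t2; w2; w3] R.
  + by apply: h; apply: hA; mem_solve.
- apply: (@E_iso _ _ _ (fill2 true s1 s2 (w1 ++ w3) w2 R) (fill2 true t1 t2 (w1 ++ w3) w2 R)).
  + by rewrite /F /fill2 /=; iso_solve [:: s1; w1; s2; w2; w3] R.
  + by rewrite /F /fill2 /=; iso_solve [:: t1; w1; t2; w2; w3] R.
  + by apply: h; apply: hA; mem_solve.
- apply: (@E_iso _ _ _ (fill2 true s1 s2 w1 w2 (w3 :: R)) (fill2 true t1 t2 w1 w2 (w3 :: R))).
  + by rewrite /F /fill2 /=; iso_solve [:: s1; w1; s2; w2; w3] R.
  + by rewrite /F /fill2 /=; iso_solve [:: t1; w1; t2; w2; w3] R.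
  + by apply: h; apply: hA; mem_solve.
- apply: (@E_iso _ _ _ (fill2 false s1 s2 (w1 ++ w3) w2 R) (fill2 false t1 t2 (w1 ++ w3) w2 R)).
  + by rewrite /F /fill2 /=; iso_solve [:: s1; w1; s2; w2; w3] R.
  + by rewrite /F /fill2 /=; iso_solve [:: t1; w1; t2; w2; w3] R.
  + by apply: h; apply: hA; mem_solve.
- apply: (@E_iso _ _ _ (fill2 false s1 s2 w1 (w2 ++ w3) R) (fill2 false t1 t2 w1 (w2 ++ w3) R)).
  + by rewrite /F /fill2 /=; iso_solve [:: s1; w1; s2; w2; w3] R.
  + by rewrite /F /fill2 /=; iso_solve [:: t1; w1; t2; w2; w3] R.
  + by apply: h; apply: hA; mem_solve.
- apply: (@E_iso _ _ _ (fill2 false s1 s2 w1 w2 (w3 :: R)) (fill2 false t1 t2 w1 w2 (w3 :: R))).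
  + by rewrite /F /fill2 /=; iso_solve [:: s1; w1; s2; w2; w3] R.
  + by rewrite /F /fill2 /=; iso_solve [:: t1; w1; t2; w2; w3] R.
  + by apply: h; apply: hA; mem_solve.
Qed.

Lemma Move_head n L s t :
  (forall w R, freshL L (w :: R) -> Vn_equiv n ((s ++ w) :: R) ((t ++ w) :: R)) ->
  Move n L s [::] [::] t [::] [::].
Proof.
move=> h sg w1 w2 w3 R hf.
have hA : forall x R', {subset flatten (x :: R') <= flatten [:: w1, w2, w3 & R]} -> 
   freshL L (x :: R') by move=> x R' hs; exact: freshL_sub1 hf hs.
case: sg => [|[|[|[|[|sg]]]]].
- apply: (@E_iso _ _ _ ((s ++ (w1 ++ w2 ++ w3)) :: R) ((t ++ (w1 ++ w2 ++ w3)) :: R)).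
  + by rewrite /F /=; iso_solve [:: s; w1; w2; w3] R.
  + by rewrite /F /=; iso_solve [:: t; w1; w2; w3] R.
  + by apply: h; apply: hA; mem_solve.
- apply: (@E_iso _ _ _ ((s ++ (w1 ++ w3 ++ w2)) :: R) ((t ++ (w1 ++ w3 ++ w2)) :: R)).
  + by rewrite /F /=; iso_solve [:: s; w1; w2; w3] R.
  + by rewrite /F /=; iso_solve [:: t; w1; w2; w3] R.
  + by apply: h; apply: hA; mem_solve.
- apply: (@E_iso _ _ _ ((s ++ (w1 ++ w2)) :: w3 :: R) ((t ++ (w1 ++ w2)) :: w3 :: R)).
  + by rewrite /F /=; iso_solve [:: s; w1; w2; w3] R.
  + by rewrite /F /=; iso_solve [:: t; w1; w2; w3] R.
  + by apply: h; apply: hA; mem_solve.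
- apply: (@E_iso _ _ _ ((s ++ (w1 ++ w3)) :: w2 :: R) ((t ++ (w1 ++ w3)) :: w2 :: R)).
  + by rewrite /F /=; iso_solve [:: s; w1; w2; w3] R.
  + by rewrite /F /=; iso_solve [:: t; w1; w2; w3] R.
  + by apply: h; apply: hA; mem_solve.
- apply: (@E_iso _ _ _ ((s ++ w1) :: (w2 ++ w3) :: R) ((t ++ w1) :: (w2 ++ w3) :: R)).
  + by rewrite /F /=; iso_solve [:: s; w1; w2; w3] R.
  + by rewrite /F /=; iso_solve [:: t; w1; w2; w3] R.
  + by apply: h; apply: hA; mem_solve.
- apply: (@E_iso _ _ _ ((s ++ w1) :: w2 :: w3 :: R) ((t ++ w1) :: w2 :: w3 :: R)).
  + by rewrite /F /=; iso_solve [:: s; w1; w2; w3] R.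
  + by rewrite /F /=; iso_solve [:: t; w1; w2; w3] R.
  + by apply: h; apply: hA; mem_solve.
Qed.

Definition crs sg := match sg with 0 => 3 | 1 => 4 | 2 => 5 | 3 => 0 | 4 => 1 | _ => 2 end.

Lemma F_crs2 sg : F (crs (crs sg)) = F sg.
Proof. by case: sg => [|[|[|[|[|sg]]]]]. Qed.

Lemma fresh_iso c X Y : iso X Y -> fresh c X = fresh c Y.
Proof.
move=> h; rewrite /fresh /ids; congr negb.
by apply: perm_mem; apply: perm_map; exact: iso_perm_flat.
Qed.

Lemma allfresh_iso cs X Y : iso X Y -> all (fun c => fresh c X) cs -> all (fun c => fresh c Y) cs.
Proof. by move=> h /allP a; apply/allP => c /a; rewrite (fresh_iso c h). Qed.

Lemma E_even n sg s1 s2 s3 w1 w2 w3 R cs e :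
  size cs = n -> ~~ odd n -> uniq cs ->
  all (fun c => fresh c (F sg s1 s2 s3 w1 w2 w3 R)) cs ->
  Vn_equiv n (F sg s1 s2 s3 w1 w2 w3 R)
    (F (crs sg) (s1 ++ twA cs e) (s2 ++ twB cs e) s3 w2 w1 w3 R).
Proof.
move=> hs ho hu hf.

case: sg hf => [|[|[|[|[|sg]]]]] hf.
- have i1 : iso (F 0 s1 s2 s3 w1 w2 w3 R) (((w2 ++ s3 ++ w3 ++ s1) ++ (w1 ++ s2)) :: R).
    by rewrite /F /=; iso_solve [:: s1; w1; s2; w2; s3; w3] R.
  apply: (E_trans (iso_E n i1)); apply: (E_trans (E_vn (vn_even2 e hs ho hu (allfresh_iso i1 hf)))).
  apply: iso_E; rewrite /F /=; iso_solve [:: s1; twA cs e; w1; s2; twB cs e; w2; s3; w3] R.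
- have i1 : iso (F 1 s1 s2 s3 w1 w2 w3 R) (((w2 ++ s1) ++ (w1 ++ s3 ++ w3 ++ s2)) :: R).
    by rewrite /F /=; iso_solve [:: s1; w1; s2; w2; s3; w3] R.
  apply: (E_trans (iso_E n i1)); apply: (E_trans (E_vn (vn_even2 e hs ho hu (allfresh_iso i1 hf)))).
  apply: iso_E; rewrite /F /=; iso_solve [:: s1; twA cs e; w1; s2; twB cs e; w2; s3; w3] R.
- have i1 : iso (F 2 s1 s2 s3 w1 w2 w3 R) (((w2 ++ s1) ++ (w1 ++ s2)) :: (s3 ++ w3) :: R).
    by rewrite /F /=; iso_solve [:: s1; w1; s2; w2; s3; w3] R.
  apply: (E_trans (iso_E n i1)); apply: (E_trans (E_vn (vn_even2 e hs ho hu (allfresh_iso i1 hf)))).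
  apply: iso_E; rewrite /F /=; iso_solve [:: s1; twA cs e; w1; s2; twB cs e; w2; s3; w3] R.
- have i1 : iso (F 3 s1 s2 s3 w1 w2 w3 R) ((w2 ++ s2) :: (w1 ++ s3 ++ w3 ++ s1) :: R).
    by rewrite /F /=; iso_solve [:: s1; w1; s2; w2; s3; w3] R.
  apply: (E_trans (iso_E n i1)); apply: (E_trans (E_vn (vn_even1 e hs ho hu (allfresh_iso i1 hf)))).
  apply: iso_E; rewrite /F /=; iso_solve [:: s1; twA cs e; w1; s2; twB cs e; w2; s3; w3] R.
- have i1 : iso (F 4 s1 s2 s3 w1 w2 w3 R) ((w2 ++ s3 ++ w3 ++ s2) :: (w1 ++ s1) :: R).
    by rewrite /F /=; iso_solve [:: s1; w1; s2; w2; s3; w3] R.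
  apply: (E_trans (iso_E n i1)); apply: (E_trans (E_vn (vn_even1 e hs ho hu (allfresh_iso i1 hf)))).
  apply: iso_E; rewrite /F /=; iso_solve [:: s1; twA cs e; w1; s2; twB cs e; w2; s3; w3] R.
- have i1 : iso (F sg.+4.+1 s1 s2 s3 w1 w2 w3 R) ((w2 ++ s2) :: (w1 ++ s1) :: (s3 ++ w3) :: R).
    by rewrite /F /=; iso_solve [:: s1; w1; s2; w2; s3; w3] R.
  apply: (E_trans (iso_E n i1)); apply: (E_trans (E_vn (vn_even1 e hs ho hu (allfresh_iso i1 hf)))).
  apply: iso_E; rewrite /F /=; iso_solve [:: s1; twA cs e; w1; s2; twB cs e; w2; s3; w3] R.
Qed.

Definition O c s : letter := (c, true, s).
Definition U c s : letter := (c, false, s).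

Lemma Move_R3 n L ccw aT aM aB x y z : uniq [:: x; y; z] ->
  Move n L (r3T ccw aT aM aB x y z) (r3M ccw aT aM aB x y z) (r3B ccw aT aM aB x y z)
    (rev (r3T ccw aT aM aB x y z)) (rev (r3M ccw aT aM aB x y z)) (rev (r3B ccw aT aM aB x y z)).
Proof. by move=> hu; apply: Move_fill3 => sh w1 w2 w3 R; apply: E_ws; apply: ws_R3. Qed.

Lemma R3slide n L x y z s : uniq [:: x; y; z] ->
  Move n L [:: O y s; O x (~~ s)] [:: O z s; U x (~~ s)] [:: U y s; U z s]
           [:: O x (~~ s); O y s] [:: U x (~~ s); O z s] [:: U z s; U y s].
Proof.
move=> hu; case: s.
- by have := @Move_R3 n L true true false false x y z hu.
- by have := @Move_R3 n L false false true true x y z hu.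
Qed.

Lemma freshL_fresh L D c : freshL L D -> c \in L -> fresh c D.
Proof. by move=> h hc; exact: h. Qed.

Lemma Move_R2 n c d e q : c != d ->
  Move n [:: c; d] [::] [::] [::] [:: O c e; O d (~~ e)]
    (if q then [:: U c e; U d (~~ e)] else [:: U d (~~ e); U c e]) [::].
Proof.
move=> hcd; apply: Move_fill2 => sh w1 w2 R hf.
have hf' : forall x, x \in [:: c; d] -> fresh x (fill2 sh [::] [::] w1 w2 R).
  move=> x hx; have := hf x hx; rewrite /fresh /ids /fill2.
  by case: sh => /=; rewrite !catA.
apply: E_ws; apply: (ws_R2 e q hcd).
- by apply: hf'; rewrite !inE eqxx.
- by apply: hf'; rewrite !inE eqxx orbT.
Qed.

Lemma Move_Vodd n cs e : size cs = n -> odd n -> uniq cs ->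
  Move n cs [::] [::] [::] (twA cs e) (twB cs e) [::].
Proof.
move=> hs ho hu; apply: Move_fill2 => sh w1 w2 R hf.
apply: E_vn; apply: (vn_odd e hs ho hu); apply/allP => x hx.
have := hf x hx; rewrite /fresh /ids /fill2.
by case: sh => /=; rewrite !catA.
Qed.

Lemma Move_R1 n c o e :
  Move n [:: c] [::] [::] [::] [:: (c, o, e); (c, ~~ o, e)] [::] [::].
Proof.
apply: Move_head => w R hf; apply: E_ws; apply: ws_R1.
by apply: hf; rewrite inE.
Qed.

Lemma Move_OC n L a b : lover a -> lover b ->
  Move n L [:: a; b] [::] [::] [:: b; a] [::] [::].
Proof. by move=> ha hb; apply: Move_head => w R _; apply: E_ws; apply: ws_OC. Qed.

Lemma nth_twA cs e k : k < size cs -> nth (0, false, false) (twA cs e) k = (nth 0 cs k, ~~ odd k, e).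
Proof. by move=> hk; rewrite /twA (nth_map 0) ?size_iota // nth_iota. Qed.
Lemma nth_twB cs e k : k < size cs -> nth (0, false, false) (twB cs e) k = (nth 0 cs k, odd k, e).
Proof. by move=> hk; rewrite /twB (nth_map 0) ?size_iota // nth_iota. Qed.
Lemma size_twA cs e : size (twA cs e) = size cs.
Proof. by rewrite /twA size_map size_iota. Qed.
Lemma size_twB cs e : size (twB cs e) = size cs.
Proof. by rewrite /twB size_map size_iota. Qed.

Lemma freshL_nil D : freshL [::] D.
Proof. by []. Qed.

Lemma split_at (A : seq letter) k : k < size A ->
  A = take k A ++ nth (0, false, false) A k :: drop k.+1 A.
Proof. by move=> hk; rewrite -drop_nth // cat_take_drop. Qed.
Lemma take_succ (A : seq letter) k : k < size A ->
  take k.+1 A = take k A ++ [:: nth (0, false, false) A k].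
Proof. by move=> hk; rewrite (take_nth (0, false, false)) // cats1. Qed.

Definition Cst p q s k := if odd k then [:: U q s; U p s] else [:: U p s; U q s].

Lemma slide_step n p q s cs k : p != q -> (forall c, c \in cs -> (c != p) && (c != q)) ->
  k < size cs ->
  Move n [::] (take k (twA cs (~~ s)) ++ O p s :: drop k (twA cs (~~ s)))
              (take k (twB cs (~~ s)) ++ O q s :: drop k (twB cs (~~ s))) (Cst p q s k)
              (take k.+1 (twA cs (~~ s)) ++ O p s :: drop k.+1 (twA cs (~~ s)))
              (take k.+1 (twB cs (~~ s)) ++ O q s :: drop k.+1 (twB cs (~~ s))) (Cst p q s k.+1).
Proof.
move=> hpq hcs hk.
set A := twA cs (~~ s); set B := twB cs (~~ s).
have hkA : k < size A by rewrite /A size_twA.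
have hkB : k < size B by rewrite /B size_twB.
set x := nth 0 cs k.
have hx : (x != p) && (x != q) by apply: hcs; rewrite mem_nth.
move: hx => /andP[hxp hxq].
rewrite (take_succ hkA) (take_succ hkB) (drop_nth (0, false, false) hkA) (drop_nth (0, false, false) hkB).
rewrite /A /B nth_twA // nth_twB // -/A -/B -/x.
rewrite /Cst /=; case ho: (odd k) => /=.
- have hu : uniq [:: x; q; p] by rewrite /= !inE negb_or hxp hxq eq_sym hpq.
  have h := Move_swap12 (@R3slide n [::] x q p s hu).
  have := @Move_emb n [::] _ _ _ _ _ _ (take k A) (drop k.+1 A) (take k B) (drop k.+1 B) [::] [::] h (freshL_nil _).
  by rewrite !cats0 -!catA /= /U /O.
- have hu : uniq [:: x; p; q] by rewrite /= !inE negb_or hxp hxq hpq.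
  have h := @R3slide n [::] x p q s hu.
  have := @Move_emb n [::] _ _ _ _ _ _ (take k A) (drop k.+1 A) (take k B) (drop k.+1 B) [::] [::] h (freshL_nil _).
  by rewrite !cats0 -!catA /= /U /O.
Qed.

Lemma slide n p q s cs : p != q -> (forall c, c \in cs -> (c != p) && (c != q)) ->
  Move n [::] (O p s :: twA cs (~~ s)) (O q s :: twB cs (~~ s)) [:: U p s; U q s]
    (twA cs (~~ s) ++ [:: O p s]) (twB cs (~~ s) ++ [:: O q s]) (Cst p q s (size cs)).
Proof.
move=> hpq hcs.
suff: forall k, k <= size cs ->
  Move n [::] (O p s :: twA cs (~~ s)) (O q s :: twB cs (~~ s)) [:: U p s; U q s]
    (take k (twA cs (~~ s)) ++ O p s :: drop k (twA cs (~~ s)))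
    (take k (twB cs (~~ s)) ++ O q s :: drop k (twB cs (~~ s))) (Cst p q s k).
  move/(_ (size cs) (leqnn _)).
  by rewrite !take_oversize ?drop_oversize ?size_twA ?size_twB.
elim=> [|k ih] hk; first by rewrite !take0 !drop0; exact: Move_refl.
apply: Move_trans (ih (ltnW hk)) _; exact: slide_step.
Qed.

Lemma flatten_F sg a b c w1 w2 w3 R :
  perm_eq (flatten (F sg a b c w1 w2 w3 R)) (a ++ b ++ c ++ flatten [:: w1, w2, w3 & R]).
Proof.
by case: sg => [|[|[|[|[|sg]]]]]; rewrite /F /idiag /interp /= ?cats0;
 apply/permP => P; rewrite !count_cat; lia.
Qed.

Lemma F_suf sg a b c v1 v2 v3 w1 w2 w3 R :
  F sg (a ++ v1) (b ++ v2) (c ++ v3) w1 w2 w3 R = F sg a b c (v1 ++ w1) (v2 ++ w2) (v3 ++ w3) R.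
Proof. by case: sg => [|[|[|[|[|sg]]]]]; rewrite /F /idiag /interp /= ?cats0 -!catA. Qed.

Lemma fresh_F c sg a b d w1 w2 w3 R :
  c \notin map lid (a ++ b ++ d) -> c \notin ids [:: w1, w2, w3 & R] ->
  fresh c (F sg a b d w1 w2 w3 R).
Proof.
rewrite /fresh /ids (perm_mem (perm_map lid (flatten_F _ _ _ _ _ _ _ _))).
rewrite /= !map_cat !mem_cat.
by repeat match goal with |- context [c \in ?X] => case: (c \in X) end.
Qed.

Ltac fresh_tac hcs :=
  let c := fresh "c" in let hc := fresh "hc" in
  move=> c hc; move: (hcs c hc); rewrite /ids /O /U /lid /= ?inE; lia.

Lemma UC_odd n p q s cs : size cs = n -> odd n -> uniq cs -> p != q ->
  (forall c, c \in cs -> (c != p) && (c != q)) ->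
  Move n (p :: q :: cs) [:: O p s] [:: O q s] [:: U p s; U q s]
                        [:: O p s] [:: O q s] [:: U q s; U p s].
Proof.
move=> hs ho hu hpq hcs.
have hsub : {subset cs <= p :: q :: cs} by move=> c hc; rewrite !inE hc !orbT.
have h1 := Move_Vodd (~~ s) hs ho hu.
have h1a := @Move_emb n cs _ _ _ _ _ _ [:: O p s] [::] [:: O q s] [::] [::] [:: U p s; U q s] h1.
have h1b := @Move_emb n cs _ _ _ _ _ _ [::] [:: O p s] [::] [:: O q s] [::] [:: U q s; U p s] h1.
have f1 : freshL cs [:: [:: O p s]; [::]; [:: O q s]; [::]; [::]; [:: U p s; U q s]].
  move=> c hc; move: (hcs c hc); rewrite /ids /O /U /lid /= ?inE; lia.
have f2 : freshL cs [:: [::]; [:: O p s]; [::]; [:: O q s]; [::]; [:: U q s; U p s]].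
  move=> c hc; move: (hcs c hc); rewrite /ids /O /U /lid /= ?inE; lia.
move: (h1a f1) (h1b f2) => {h1a h1b f1 f2} /= h1a h1b.
apply: Move_trans (Move_weak hsub h1a) _.
apply: Move_trans (Move_weak hsub (Move_sym h1b)).
have := @slide n p q s cs hpq hcs; rewrite /Cst hs ho /= => h2.
rewrite !cats0; by apply: (Move_weak _ h2) => c; rewrite in_nil.
Qed.

Definition swpq (p q c : nat) := if c == p then q else if c == q then p else c.
Lemma swpq_inj p q : injective (swpq p q).
Proof.
move=> a b; rewrite /swpq.
case: (a =P p) => ?; case: (a =P q) => ?; case: (b =P p) => ?; case: (b =P q) => ?; lia.
Qed.

Definition relab (f : nat -> nat) (D : gauss) : gauss :=
  map (map (fun l => (f (lid l), lover l, lsign l))) D.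

Lemma relab_F f sg a b c w1 w2 w3 R :
  relab f (F sg a b c w1 w2 w3 R) =
  F sg (map (fun l => (f (lid l), lover l, lsign l)) a) (map (fun l => (f (lid l), lover l, lsign l)) b)
       (map (fun l => (f (lid l), lover l, lsign l)) c) (map (fun l => (f (lid l), lover l, lsign l)) w1)
       (map (fun l => (f (lid l), lover l, lsign l)) w2) (map (fun l => (f (lid l), lover l, lsign l)) w3)
       (relab f R).
Proof.
by case: sg => [|[|[|[|[|sg]]]]]; rewrite /F /idiag /interp /relab /= ?cats0 !map_cat ?map_cat ?cats0.
Qed.

Lemma map_relab_id f (w : seq letter) : (forall l, l \in w -> f (lid l) = lid l) ->
  map (fun l => (f (lid l), lover l, lsign l)) w = w.
Proof.
move=> h; rewrite -{2}(map_id w); apply/eq_in_map => l hl.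
by rewrite h //; case: l {hl} => [[]].
Qed.

Lemma relab_id f (R : gauss) : (forall l, l \in flatten R -> f (lid l) = lid l) -> relab f R = R.
Proof.
elim: R => [|w R ih] h //=; rewrite map_relab_id ?ih // => l hl; apply: h; rewrite mem_cat hl ?orbT //.
Qed.

Lemma UC_even n p q s cs : size cs = n -> ~~ odd n -> uniq cs -> p != q ->
  (forall c, c \in cs -> (c != p) && (c != q)) ->
  Move n (p :: q :: cs) [:: O p s] [:: O q s] [:: U p s; U q s]
                        [:: O p s] [:: O q s] [:: U q s; U p s].
Proof.
move=> hs ho hu hpq hcs sg w1 w2 w3 R hf.
have hfc : forall c, c \in cs -> c \notin ids [:: w1, w2, w3 & R].
  by move=> c hc; apply: hf; rewrite !inE hc !orbT.
have hcs' : forall c, c \in cs -> c \notin map lid ([:: O p s] ++ [:: O q s] ++ [:: U p s; U q s]).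
  by move=> c hc; move: (hcs c hc); rewrite /O /U /lid /= !inE; lia.
have hcs'' : forall c, c \in cs -> c \notin map lid ([::] ++ [::] ++ [:: U p s; U q s]).
  by move=> c hc; move: (hcs c hc); rewrite /O /U /lid /= !inE; lia.
have e1 := @E_even n sg [:: O p s] [:: O q s] [:: U p s; U q s] w1 w2 w3 R cs (~~ s) hs ho hu.
have {e1} e1 : Vn_equiv n (F sg [:: O p s] [:: O q s] [:: U p s; U q s] w1 w2 w3 R)
    (F (crs sg) (O p s :: twA cs (~~ s)) (O q s :: twB cs (~~ s)) [:: U p s; U q s] w2 w1 w3 R).
  by apply: e1; apply/allP => c hc; apply: fresh_F; [move: (hcs c hc); rewrite /O /U /lid /= !inE; lia | exact: hfc].
apply: (E_trans e1).
have e2 := @slide n p q s cs hpq hcs (crs sg) w2 w1 w3 R (freshL_nil _).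
rewrite /Cst hs (negbTE ho) in e2.
apply: (E_trans e2).
have -> : F (crs sg) (twA cs (~~ s) ++ [:: O p s]) (twB cs (~~ s) ++ [:: O q s]) [:: U p s; U q s] w2 w1 w3 R
  = F (crs sg) (twA cs (~~ s)) (twB cs (~~ s)) [:: U p s; U q s] ([:: O p s] ++ w2) ([:: O q s] ++ w1) w3 R.
  by rewrite -(F_suf _ _ _ [:: U p s; U q s] _ _ [::]) cats0.
have e4 := @E_even n sg [::] [::] [:: U p s; U q s] ([:: O q s] ++ w1) ([:: O p s] ++ w2) w3 R cs (~~ s) hs ho hu.
have {e4} e4 : Vn_equiv n (F sg [::] [::] [:: U p s; U q s] ([:: O q s] ++ w1) ([:: O p s] ++ w2) w3 R)
    (F (crs sg) (twA cs (~~ s)) (twB cs (~~ s)) [:: U p s; U q s] ([:: O p s] ++ w2) ([:: O q s] ++ w1) w3 R).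
  apply: e4; apply/allP => c hc; rewrite -(F_suf sg [::] [::] [:: U p s; U q s] [:: O q s] [:: O p s] [::]).
  by apply: fresh_F; [move: (hcs c hc); rewrite /O /U /lid /= !inE; lia | exact: hfc].
apply: (E_trans (E_sym e4)); rewrite -(F_suf sg [::] [::] [:: U p s; U q s] [:: O q s] [:: O p s] [::]) /=.
set X := F sg [:: O q s] [:: O p s] [:: U p s; U q s] w1 w2 w3 R.
have e5 : Vn_equiv n X (relab (swpq p q) X) by apply: E_ws; apply: ws_relabel; exact: swpq_inj.
apply: (E_trans e5); rewrite /X relab_F /=.
have hid : forall l, l \in flatten [:: w1, w2, w3 & R] -> swpq p q (lid l) = lid l.
  move=> l hl; rewrite /swpq.
  have hp : lid l != p.
    apply/eqP => e; move: (hf p); rewrite inE eqxx => /(_ isT); rewrite /ids -e.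
    by rewrite (map_f lid hl).
  have hq : lid l != q.
    apply/eqP => e; move: (hf q); rewrite !inE eqxx orbT => /(_ isT); rewrite /ids -e.
    by rewrite (map_f lid hl).
  by rewrite (negbTE hp) (negbTE hq).
rewrite !map_relab_id ?relab_id; first last.
- by move=> l hl; apply: hid; rewrite /= !mem_cat hl ?orbT.
- by move=> l hl; apply: hid; rewrite /= !mem_cat hl ?orbT.
- by move=> l hl; apply: hid; rewrite /= !mem_cat hl ?orbT.
- by move=> l hl; apply: hid; rewrite /= !mem_cat hl ?orbT.
rewrite /swpq /O /U /lid /lover /lsign /= eqxx (negbTE hpq) eqxx.
rewrite eq_sym (negbTE hpq); exact: E_refl.
Qed.

Lemma UC_same n p q s cs : size cs = n -> uniq cs -> p != q ->
  (forall c, c \in cs -> (c != p) && (c != q)) ->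
  Move n (p :: q :: cs) [:: O p s] [:: O q s] [:: U p s; U q s]
                        [:: O p s] [:: O q s] [:: U q s; U p s].
Proof.
move=> hs hu hpq hcs; case ho: (odd n).
- exact: UC_odd.
- by apply: UC_even => //; rewrite ho.
Qed.

Lemma R3opp1 n L x y z s : uniq [:: x; y; z] ->
  Move n L [:: O y s; O x s] [:: U x s; O z (~~ s)] [:: U y s; U z (~~ s)]
           [:: O x s; O y s] [:: O z (~~ s); U x s] [:: U z (~~ s); U y s].
Proof.
move=> hu; case: s.
- by have := @Move_R3 n L true true true false x y z hu.
- by have := @Move_R3 n L false false false true x y z hu.
Qed.

Ltac bool_tac := repeat match goal with
  | |- context [?a == ?b] => case: (a == b)
  | |- context [?a \in ?b] => case: (a \in b) end.

Ltac sub_tac := let c := fresh "c" in move=> c; rewrite !inE; bool_tac; by move=> /=.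

Ltac ftac := let c := fresh "c" in
  move=> c; rewrite /ids /O /U /lid /= ?inE ?mem_iota; lia.

Lemma UC_opp n p q m sp : p != q -> p < m -> q < m ->
  Move n [:: p, q, m, m.+1, m.+2, m.+3 & iota m.+4 n] [:: O p sp] [:: O q (~~ sp)] [:: U p sp; U q (~~ sp)]
    [:: O p sp] [:: O q (~~ sp)] [:: U q (~~ sp); U p sp].
Proof.
move=> hpq hpm hqm.
set LT := [:: p, q, m, m.+1, m.+2, m.+3 & iota m.+4 n].
set sq := ~~ sp.
set x := m; set x' := m.+1; set y := m.+2; set y' := m.+3.
have s1 : Move n LT [:: O p sp] [:: O q sq] [:: U p sp; U q sq]
    [:: O p sp; O x sp; O x' sq] [:: U x' sq; U x sp; O q sq] [:: U p sp; U q sq].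
  have h := @Move_R2 n x x' sp false ltac:(rewrite /x /x'; lia).
  have := Move_emb (u1 := [:: O p sp]) (v1 := [::]) (u2 := [::]) (v2 := [:: O q sq]) (u3 := [::]) (v3 := [:: U p sp; U q sq]) h.
  move=> h'; apply: (Move_weak _ (h' _)); first by sub_tac.
  rewrite /x /x' /sq; ftac.
have s2 : Move n LT [:: O p sp; O x sp; O x' sq] [:: U x' sq; U x sp; O q sq] [:: U p sp; U q sq]
    [:: O x sp; O p sp; O x' sq] [:: U x' sq; O q sq; U x sp] [:: U q sq; U p sp].
  have h := @R3opp1 n [::] x p q sp ltac:(rewrite /= !inE /x; lia).
  have := Move_emb (u1 := [::]) (v1 := [:: O x' sq]) (u2 := [:: U x' sq]) (v2 := [::]) (u3 := [::]) (v3 := [::]) h.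
  by move=> h'; apply: (Move_weak _ (h' (freshL_nil _))).
have s3 : Move n LT [:: O x sp; O p sp; O x' sq] [:: U x' sq; O q sq; U x sp] [:: U q sq; U p sp]
    [:: O y sq; O y' sp; O x sp; O p sp; O x' sq] [:: U x' sq; O q sq; U x sp] [:: U y' sp; U y sq; U q sq; U p sp].
  have h := Move_swap23 (@Move_R2 n y y' sq false ltac:(rewrite /y /y'; lia)).
  have := Move_emb (u1 := [::]) (v1 := [:: O x sp; O p sp; O x' sq]) (u2 := [::]) (v2 := [:: U x' sq; O q sq; U x sp]) (u3 := [::]) (v3 := [:: U q sq; U p sp]) h.
  rewrite /sq negbK.
  move=> h'; apply: (Move_weak _ (h' _)); first by sub_tac.
  rewrite /x /x' /y /y'; ftac.
have s4 : Move n LT [:: O y sq; O y' sp; O x sp; O p sp; O x' sq] [:: U x' sq; O q sq; U x sp] [:: U y' sp; U y sq; U q sq; U p sp]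
    [:: O y sq; O x sp; O y' sp; O p sp; O x' sq] [:: U x' sq; O q sq; U x sp] [:: U y' sp; U y sq; U q sq; U p sp].
  have h := @Move_OC n [::] (O y' sp) (O x sp) isT isT.
  have := Move_emb (u1 := [:: O y sq]) (v1 := [:: O p sp; O x' sq]) (u2 := [::]) (v2 := [:: U x' sq; O q sq; U x sp]) (u3 := [::]) (v3 := [:: U y' sp; U y sq; U q sq; U p sp]) h.
  by move=> h'; apply: (Move_weak _ (h' (freshL_nil _))).
have s5 : Move n LT [:: O y sq; O x sp; O y' sp; O p sp; O x' sq] [:: U x' sq; O q sq; U x sp] [:: U y' sp; U y sq; U q sq; U p sp]
    [:: O x sp; O y sq; O y' sp; O p sp; O x' sq] [:: U x' sq; U x sp; O q sq] [:: U y' sp; U q sq; U y sq; U p sp].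
  have h := @R3slide n [::] x y q sq ltac:(rewrite /= !inE /x /y; lia).
  rewrite /sq negbK in h.
  have := Move_emb (u1 := [::]) (v1 := [:: O y' sp; O p sp; O x' sq]) (u2 := [:: U x' sq]) (v2 := [::]) (u3 := [:: U y' sp]) (v3 := [:: U p sp]) h.
  by move=> h'; apply: (Move_weak _ (h' (freshL_nil _))).
have s6 : Move n LT [:: O x sp; O y sq; O y' sp; O p sp; O x' sq] [:: U x' sq; U x sp; O q sq] [:: U y' sp; U q sq; U y sq; U p sp]
    [:: O x sp; O x' sq; O y sq; O y' sp; O p sp] [:: U x' sq; U x sp; O q sq] [:: U y' sp; U q sq; U y sq; U p sp].
  have e1 := @Move_OC n [::] (O p sp) (O x' sq) isT isT.
  have e2 := @Move_OC n [::] (O y' sp) (O x' sq) isT isT.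
  have e3 := @Move_OC n [::] (O y sq) (O x' sq) isT isT.
  have := Move_emb (u1 := [:: O x sp; O y sq; O y' sp]) (v1 := [::]) (u2 := [::]) (v2 := [:: U x' sq; U x sp; O q sq]) (u3 := [::]) (v3 := [:: U y' sp; U q sq; U y sq; U p sp]) e1.
  move=> /(_ (freshL_nil _)) /= {}e1.
  have := Move_emb (u1 := [:: O x sp; O y sq]) (v1 := [:: O p sp]) (u2 := [::]) (v2 := [:: U x' sq; U x sp; O q sq]) (u3 := [::]) (v3 := [:: U y' sp; U q sq; U y sq; U p sp]) e2.
  move=> /(_ (freshL_nil _)) /= {}e2.
  have := Move_emb (u1 := [:: O x sp]) (v1 := [:: O y' sp; O p sp]) (u2 := [::]) (v2 := [:: U x' sq; U x sp; O q sq]) (u3 := [::]) (v3 := [:: U y' sp; U q sq; U y sq; U p sp]) e3.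
  move=> /(_ (freshL_nil _)) /= {}e3.
  apply: (Move_weak _ (Move_trans e1 (Move_trans e2 e3))); by [].
have s7 : Move n LT [:: O x sp; O x' sq; O y sq; O y' sp; O p sp] [:: U x' sq; U x sp; O q sq] [:: U y' sp; U q sq; U y sq; U p sp]
    [:: O y sq; O y' sp; O p sp] [:: O q sq] [:: U y' sp; U q sq; U y sq; U p sp].
  have h := @Move_R2 n x x' sp false ltac:(rewrite /x /x'; lia).
  have := Move_emb (u1 := [::]) (v1 := [:: O y sq; O y' sp; O p sp]) (u2 := [::]) (v2 := [:: O q sq]) (u3 := [::]) (v3 := [:: U y' sp; U q sq; U y sq; U p sp]) h.
  move=> h'; apply: Move_sym; apply: (Move_weak _ (h' _)); first by sub_tac.
  rewrite /x /x' /y /y' /sq; ftac.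
have s8 : Move n LT [:: O y sq; O y' sp; O p sp] [:: O q sq] [:: U y' sp; U q sq; U y sq; U p sp]
    [:: O y sq; O y' sp; O p sp] [:: O q sq] [:: U y' sp; U y sq; U q sq; U p sp].
  have h := @UC_same n y q sq (iota m.+4 n) (size_iota _ _) (iota_uniq _ _) ltac:(rewrite /y; lia)
    ltac:(move=> c; rewrite mem_iota /y; lia).
  have := Move_emb (u1 := [::]) (v1 := [:: O y' sp; O p sp]) (u2 := [::]) (v2 := [::]) (u3 := [:: U y' sp]) (v3 := [:: U p sp]) (Move_sym h).
  move=> h'; apply: (Move_weak _ (h' _)); first by sub_tac.
  rewrite /y /y' /sq; ftac.
have s9 : Move n LT [:: O y sq; O y' sp; O p sp] [:: O q sq] [:: U y' sp; U y sq; U q sq; U p sp]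
    [:: O p sp] [:: O q sq] [:: U q sq; U p sp].
  have h := Move_swap23 (@Move_R2 n y y' sq false ltac:(rewrite /y /y'; lia)).
  have := Move_emb (u1 := [::]) (v1 := [:: O p sp]) (u2 := [::]) (v2 := [:: O q sq]) (u3 := [::]) (v3 := [:: U q sq; U p sp]) h.
  rewrite /sq negbK.
  move=> h'; apply: Move_sym; apply: (Move_weak _ (h' _)); first by sub_tac.
  rewrite /y /y'; ftac.
apply: (Move_trans s1); apply: (Move_trans s2); apply: (Move_trans s3); apply: (Move_trans s4).
apply: (Move_trans s5); apply: (Move_trans s6); apply: (Move_trans s7); apply: (Move_trans s8).
exact: s9.
Qed.

Lemma UC_gen n p q m sp sq : p != q -> p < m -> q < m ->
  Move n [:: p, q, m, m.+1, m.+2, m.+3 & iota m.+4 n] [:: O p sp] [:: O q sq] [:: U p sp; U q sq]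
    [:: O p sp] [:: O q sq] [:: U q sq; U p sp].
Proof.
move=> hpq hpm hqm.
have hsame : forall s, Move n [:: p, q, m, m.+1, m.+2, m.+3 & iota m.+4 n] [:: O p s] [:: O q s] [:: U p s; U q s]
    [:: O p s] [:: O q s] [:: U q s; U p s].
  move=> s; apply: (Move_weak _ (UC_same s (size_iota m.+4 n) (iota_uniq m.+4 n) hpq _)); first by sub_tac.
  by move=> c; rewrite mem_iota; lia.
case: sp; case: sq; try exact: hsame.
- exact: (@UC_opp n p q m true hpq hpm hqm).
- exact: (@UC_opp n p q m false hpq hpm hqm).
Qed.

Lemma R3mix2 n L x y z s : uniq [:: x; y; z] ->
  Move n L [:: O y (~~ s); O x s] [:: U x s; O z s] [:: U z s; U y (~~ s)]
           [:: O x s; O y (~~ s)] [:: O z s; U x s] [:: U y (~~ s); U z s].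
Proof.
move=> hu; case: s.
- by have := @Move_R3 n L true true true true x y z hu.
- by have := @Move_R3 n L false false false false x y z hu.
Qed.

Ltac emb h U1 V1 U2 V2 U3 V3 :=
  have := Move_emb (u1 := U1) (v1 := V1) (u2 := U2) (v2 := V2) (u3 := U3) (v3 := V3) h.

Lemma MIX n x z m sx sz : x != z -> x < m -> z < m ->
  Move n [:: x, z, m, m.+1 & iota m.+2 n] [:: O x sx] [:: U x sx; O z sz] [:: U z sz]
    [:: O x sx] [:: O z sz; U x sx] [:: U z sz].
Proof.
move=> hxz hxm hzm.
set LT := [:: x, z, m, m.+1 & iota m.+2 n].
have hyy : m != m.+1 by lia.
have huc : forall s, Move n (m.+1 :: z :: iota m.+2 n) [:: O m.+1 s] [:: O z s] [:: U m.+1 s; U z s]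
    [:: O m.+1 s] [:: O z s] [:: U z s; U m.+1 s].
  move=> s; apply: (UC_same s (size_iota m.+2 n) (iota_uniq m.+2 n)); first by lia.
  by move=> c; rewrite mem_iota; lia.
case: (boolP (sz == ~~ sx)) => [/eqP -> | hs].
- set s := sx.
  have a1 : Move n LT [:: O x s] [:: U x s; O z (~~ s)] [:: U z (~~ s)]
      [:: O m s; O m.+1 (~~ s); O x s] [:: U x s; O z (~~ s)] [:: U m.+1 (~~ s); U m s; U z (~~ s)].
    have h := Move_swap23 (@Move_R2 n m m.+1 s false hyy).
    emb h ([::] : seq letter) [:: O x s] ([::] : seq letter) [:: U x s; O z (~~ s)] ([::] : seq letter) [:: U z (~~ s)].
    move=> h'; apply: (Move_weak _ (h' _)); first by sub_tac.
    ftac.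
  have a2 : Move n LT [:: O m s; O m.+1 (~~ s); O x s] [:: U x s; O z (~~ s)] [:: U m.+1 (~~ s); U m s; U z (~~ s)]
      [:: O m s; O x s; O m.+1 (~~ s)] [:: U x s; O z (~~ s)] [:: U m.+1 (~~ s); U m s; U z (~~ s)].
    have h := @Move_OC n [::] (O m.+1 (~~ s)) (O x s) isT isT.
    emb h [:: O m s] ([::] : seq letter) ([::] : seq letter) [:: U x s; O z (~~ s)] ([::] : seq letter) [:: U m.+1 (~~ s); U m s; U z (~~ s)].
    by move=> h'; apply: (Move_weak _ (h' (freshL_nil _))).
  have a3 : Move n LT [:: O m s; O x s; O m.+1 (~~ s)] [:: U x s; O z (~~ s)] [:: U m.+1 (~~ s); U m s; U z (~~ s)]
      [:: O x s; O m s; O m.+1 (~~ s)] [:: O z (~~ s); U x s] [:: U m.+1 (~~ s); U z (~~ s); U m s].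
    have h := @R3opp1 n [::] x m z s ltac:(rewrite /= !inE; lia).
    emb h ([::] : seq letter) [:: O m.+1 (~~ s)] ([::] : seq letter) ([::] : seq letter) [:: U m.+1 (~~ s)] ([::] : seq letter).
    by move=> h'; apply: (Move_weak _ (h' (freshL_nil _))).
  have a4 : Move n LT [:: O x s; O m s; O m.+1 (~~ s)] [:: O z (~~ s); U x s] [:: U m.+1 (~~ s); U z (~~ s); U m s]
      [:: O x s; O m s; O m.+1 (~~ s)] [:: O z (~~ s); U x s] [:: U z (~~ s); U m.+1 (~~ s); U m s].
    have h := huc (~~ s).
    emb h [:: O x s; O m s] ([::] : seq letter) ([::] : seq letter) [:: U x s] ([::] : seq letter) [:: U m s].
    move=> h'; apply: (Move_weak _ (h' _)); first by sub_tac.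
    ftac.
  have a5 : Move n LT [:: O x s; O m s; O m.+1 (~~ s)] [:: O z (~~ s); U x s] [:: U z (~~ s); U m.+1 (~~ s); U m s]
      [:: O x s] [:: O z (~~ s); U x s] [:: U z (~~ s)].
    have h := Move_swap23 (@Move_R2 n m m.+1 s false hyy).
    emb h [:: O x s] ([::] : seq letter) ([::] : seq letter) [:: O z (~~ s); U x s] [:: U z (~~ s)] ([::] : seq letter).
    move=> h'; apply: Move_sym; apply: (Move_weak _ (h' _)); first by sub_tac.
    ftac.
  apply: (Move_trans a1); apply: (Move_trans a2); apply: (Move_trans a3); apply: (Move_trans a4); exact: a5.
- have -> : sz = sx by move: hs; case: sz; case: sx.
  set s := sx.
  have b1 : Move n LT [:: O x s] [:: U x s; O z s] [:: U z s]
      [:: O m (~~ s); O m.+1 s; O x s] [:: U x s; O z s] [:: U z s; U m (~~ s); U m.+1 s].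
    have h := Move_swap23 (@Move_R2 n m m.+1 (~~ s) true hyy).
    rewrite negbK in h.
    emb h ([::] : seq letter) [:: O x s] ([::] : seq letter) [:: U x s; O z s] [:: U z s] ([::] : seq letter).
    move=> h'; apply: (Move_weak _ (h' _)); first by sub_tac.
    ftac.
  have b2 : Move n LT [:: O m (~~ s); O m.+1 s; O x s] [:: U x s; O z s] [:: U z s; U m (~~ s); U m.+1 s]
      [:: O m (~~ s); O x s; O m.+1 s] [:: U x s; O z s] [:: U z s; U m (~~ s); U m.+1 s].
    have h := @Move_OC n [::] (O m.+1 s) (O x s) isT isT.
    emb h [:: O m (~~ s)] ([::] : seq letter) ([::] : seq letter) [:: U x s; O z s] ([::] : seq letter) [:: U z s; U m (~~ s); U m.+1 s].
    by move=> h'; apply: (Move_weak _ (h' (freshL_nil _))).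
  have b3 : Move n LT [:: O m (~~ s); O x s; O m.+1 s] [:: U x s; O z s] [:: U z s; U m (~~ s); U m.+1 s]
      [:: O x s; O m (~~ s); O m.+1 s] [:: O z s; U x s] [:: U m (~~ s); U z s; U m.+1 s].
    have h := @R3mix2 n [::] x m z s ltac:(rewrite /= !inE; lia).
    emb h ([::] : seq letter) [:: O m.+1 s] ([::] : seq letter) ([::] : seq letter) ([::] : seq letter) [:: U m.+1 s].
    by move=> h'; apply: (Move_weak _ (h' (freshL_nil _))).
  have b4 : Move n LT [:: O x s; O m (~~ s); O m.+1 s] [:: O z s; U x s] [:: U m (~~ s); U z s; U m.+1 s]
      [:: O x s; O m (~~ s); O m.+1 s] [:: O z s; U x s] [:: U m (~~ s); U m.+1 s; U z s].
    have h := Move_sym (huc s).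
    emb h [:: O x s; O m (~~ s)] ([::] : seq letter) ([::] : seq letter) [:: U x s] [:: U m (~~ s)] ([::] : seq letter).
    move=> h'; apply: (Move_weak _ (h' _)); first by sub_tac.
    ftac.
  have b5 : Move n LT [:: O x s; O m (~~ s); O m.+1 s] [:: O z s; U x s] [:: U m (~~ s); U m.+1 s; U z s]
      [:: O x s] [:: O z s; U x s] [:: U z s].
    have h := Move_swap23 (@Move_R2 n m m.+1 (~~ s) true hyy).
    rewrite negbK in h.
    emb h [:: O x s] ([::] : seq letter) ([::] : seq letter) [:: O z s; U x s] ([::] : seq letter) [:: U z s].
    move=> h'; apply: Move_sym; apply: (Move_weak _ (h' _)); first by sub_tac.
    ftac.
  apply: (Move_trans b1); apply: (Move_trans b2); apply: (Move_trans b3); apply: (Move_trans b4); exact: b5.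
Qed.

Lemma split_mem (x : letter) (D : gauss) : x \in flatten D ->
  exists D1 z1 z2 D2, D = D1 ++ (z1 ++ x :: z2) :: D2.
Proof.
move=> /flattenP[c hc hx].
case/splitPr: hc => D1 D2; case/splitPr: hx => z1 z2.
by exists D1, z1, z2, D2.
Qed.

Lemma split_seq (x : letter) (w : seq letter) : x \in w -> exists z1 z2, w = z1 ++ x :: z2.
Proof. by case/splitPr => z1 z2; exists z1, z2. Qed.

Lemma iso_front (D1 D2 : gauss) c : iso (D1 ++ c :: D2) (c :: D1 ++ D2).
Proof.
apply: iso_permD; rewrite -cat1s.
have h := perm_catCA D1 [:: c] D2; rewrite /= in h; by rewrite h.
Qed.

Ltac reify_seq2 env t :=
  lazymatch t with
  | ?a ++ ?b => let ra := reify_seq2 env a in let rb := reify_seq2 env b in constr:(ra ++ rb)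
  | [::] => constr:(@nil nat)
  | ?x :: ?r => let i := lookup (x :: nil) env in let rr := reify_seq2 env r in constr:(i :: rr)
  | ?a => let i := lookup a env in constr:([:: i])
  end.
Ltac reify_diag2 env R t :=
  lazymatch t with
  | R => constr:(@nil (seq nat))
  | ?c :: ?ds => let rc := reify_seq2 env c in let rds := reify_diag2 env R ds in constr:(rc :: rds)
  | [::] => constr:(@nil (seq nat))
  end.
Ltac iso_solve2 env R :=
  rewrite /F /idiag /interp /= ?cats0;
  lazymatch goal with
  | |- iso ?X ?Y =>
    let cx := reify_diag2 env R X in let cy := reify_diag2 env R Y in
    apply: (@isoB_iso env cx cy R X Y);
    [ by vm_compute
    | rewrite /idiag /interp /= ?cats0 -?catA //
    | rewrite /idiag /interp /= ?cats0 -?catA // ]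
  end.

Lemma locA (w : seq letter) (R : gauss) (x1 x2 : letter) :
  x1 \in w ++ flatten R -> x2 \in w ++ flatten R -> x1 != x2 ->
  exists sg W1 W2 W3 R', forall s, iso ((s ++ w) :: R) (F sg [:: x1] [:: x2] s W1 W2 W3 R').
Proof.
rewrite !mem_cat => h1 h2 hne.
have hne' : (x2 == x1) = false by rewrite eq_sym (negbTE hne).
case/orP: h1 => h1.
- case/split_seq: h1 => w1 [w2 ew]; subst w.
  case/orP: h2 => h2.
  + move: h2; rewrite mem_cat inE hne' /= => /orP[] h2.
    * case/split_seq: h2 => y1 [y2 ->].
      exists 1, w2, y2, y1, R => s.
      by iso_solve2 [:: s; y1; [:: x2]; y2; [:: x1]; w2] R.
    * case/split_seq: h2 => y1 [y2 ->].
      exists 0, y1, y2, w1, R => s.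
      by iso_solve2 [:: s; w1; [:: x1]; y1; [:: x2]; y2] R.
  + case/split_mem: h2 => R1 [y1 [y2 [R2 ->]]].
    exists 3, w2, (y2 ++ y1), w1, (R1 ++ R2) => s.
    apply: (iso_trans (iso_cons _ (iso_front _ _ _))).
    by iso_solve2 [:: s; w1; [:: x1]; w2; y1; [:: x2]; y2] (R1 ++ R2).
- case/split_mem: h1 => R1 [z1 [z2 [R2 eR]]]; subst R.
  have hf : forall s, iso ((s ++ w) :: R1 ++ (z1 ++ x1 :: z2) :: R2) ((s ++ w) :: (z1 ++ x1 :: z2) :: R1 ++ R2).
    by move=> s; apply: iso_cons; exact: iso_front.
  case/orP: h2 => h2.
  + case/split_seq: h2 => y1 [y2 ew]; subst w.
    exists 4, (z2 ++ z1), y2, y1, (R1 ++ R2) => s.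
    apply: (iso_trans (hf s)).
    by iso_solve2 [:: s; y1; [:: x2]; y2; z1; [:: x1]; z2] (R1 ++ R2).
  + move: h2; rewrite flatten_cat /= !mem_cat inE hne' /=.
    case/or3P=> [h2|/orP[h2|h2]|h2].
    * have : x2 \in flatten (R1 ++ R2) by rewrite flatten_cat mem_cat h2.
      case/split_mem => Q1 [t1 [t2 [Q2 eQ]]].
      exists 5, (z2 ++ z1), (t2 ++ t1), w, (Q1 ++ Q2) => s.
      apply: (iso_trans (hf s)); rewrite eQ.
      apply: (iso_trans (iso_cons _ (iso_cons _ (iso_front _ _ _)))).
      by iso_solve2 [:: s; w; z1; [:: x1]; z2; t1; [:: x2]; t2] (Q1 ++ Q2).
    * case/split_seq: h2 => y1 [y2 ez]; subst z1.
      exists 2, (z2 ++ y1), y2, w, (R1 ++ R2) => s.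
      apply: (iso_trans (hf s)).
      by iso_solve2 [:: s; w; y1; [:: x2]; y2; [:: x1]; z2] (R1 ++ R2).
    * case/split_seq: h2 => y1 [y2 ez]; subst z2.
      exists 2, y1, (y2 ++ z1), w, (R1 ++ R2) => s.
      apply: (iso_trans (hf s)).
      by iso_solve2 [:: s; w; z1; [:: x1]; y1; [:: x2]; y2] (R1 ++ R2).
    * have : x2 \in flatten (R1 ++ R2) by rewrite flatten_cat mem_cat h2 orbT.
      case/split_mem => Q1 [t1 [t2 [Q2 eQ]]].
      exists 5, (z2 ++ z1), (t2 ++ t1), w, (Q1 ++ Q2) => s.
      apply: (iso_trans (hf s)); rewrite eQ.
      apply: (iso_trans (iso_cons _ (iso_cons _ (iso_front _ _ _)))).
      by iso_solve2 [:: s; w; z1; [:: x1]; z2; t1; [:: x2]; t2] (Q1 ++ Q2).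
Qed.

Lemma count_split (c : nat) (s : seq letter) :
  count (fun l => lid l == c) s =
  count (fun l => (lid l == c) && lover l) s + count (fun l => (lid l == c) && ~~ lover l) s.
Proof. by elim: s => [|l s ih] //=; rewrite ih; case: (lid l == c); case: (lover l) => /=; lia. Qed.

Lemma count2 D c : wf_gauss D -> c \in ids D -> count (fun l => lid l == c) (flatten D) = 2.
Proof. by move=> wf hc; case: (wf c hc) => h1 h2 _; rewrite count_split h1 h2. Qed.

Lemma rest_fresh D X rest c : wf_gauss D -> perm_eq (flatten D) (X ++ flatten rest) ->
  c \in ids D -> count (fun l => lid l == c) X = 2 -> c \notin ids rest.
Proof.
move=> wf hp hc hX; have := count2 wf hc.
rewrite (permP hp) count_cat hX => h.
have h0 : count (fun l => lid l == c) (flatten rest) = 0 by apply/eqP; rewrite -(eqn_add2l 2) h.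
apply/negP; rewrite /ids => /mapP[l hl el].
have : 0 < count (fun l => lid l == c) (flatten rest).
  by rewrite -has_count; apply/hasP; exists l => //; rewrite el.
by rewrite h0.
Qed.

Lemma le_sumn (s : seq nat) x : x \in s -> x <= sumn s.
Proof. by elim: s => [|y s ih] //=; rewrite inE => /orP[/eqP->|/ih]; lia. Qed.

Lemma rest_big D X rest c : perm_eq (flatten D) (X ++ flatten rest) ->
  sumn (ids D) < c -> c \notin ids rest.
Proof.
move=> hp hc; apply/negP => h.
have : c \in ids D.
  rewrite /ids (perm_mem (perm_map lid hp)) map_cat mem_cat; by rewrite -/(ids rest) h orbT.
by move/le_sumn; lia.
Qed.

Lemma in_ids D l : l \in flatten D -> lid l \in ids D.
Proof. by move=> h; rewrite /ids map_f. Qed.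

Lemma letter_eta (l : letter) : l = (lid l, lover l, lsign l).
Proof. by case: l => [[]]. Qed.

Lemma partner D l : wf_gauss D -> l \in flatten D ->
  exists l', [/\ l' \in flatten D, l' = (lid l, ~~ lover l, lsign l) & l' != l].
Proof.
move=> wf hl; have hc := in_ids hl.
case: (wf _ hc) => h1 h2 hs.
have [l' [hl' e1 e2]] : exists l', [/\ l' \in flatten D, lid l' = lid l & lover l' = ~~ lover l].
  case ho: (lover l).
  - have : has (fun x => (lid x == lid l) && ~~ lover x) (flatten D) by rewrite has_count h2.
    by case/hasP => x hx /andP[/eqP ex hox]; exists x; split => //; apply/negbTE.
  - have : has (fun x => (lid x == lid l) && lover x) (flatten D) by rewrite has_count h1.
    by case/hasP => x hx /andP[/eqP ex hox]; exists x; split => //.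
exists l'; split => //.
- by rewrite (letter_eta l') e1 e2 (hs l' l).
- by apply/eqP => e; move: e2; rewrite e; case: (lover l).
Qed.

Lemma big_iota S c n : c \in [:: S.+1, S.+2, S.+3, S.+4 & iota S.+1.+4 n] -> S < c.
Proof. rewrite !inE mem_iota; lia. Qed.

Lemma partA n D D' : wf_gauss D -> UC_step D D' -> Vn_equiv n D D'.
Proof.
move=> wf [a [b [w [R [ha hb eD eD']]]]]; subst D D'.
set D := (a :: b :: w) :: R.
have haD : a \in flatten D by rewrite /D /= inE eqxx.
have hbD : b \in flatten D by rewrite /D /= !inE eqxx orbT.
have [a' [ha'D ea' na']] := partner wf haD.
have [b' [hb'D eb' nb']] := partner wf hbD.
set p := lid a; set q := lid b.
have hpq : p != q.
  apply/negP => /eqP e.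
  case: (wf p (in_ids haD)) => _ h2 _.
  move: h2; rewrite /D /= ha /= eqxx /= -/q -e eqxx hb /=; lia.
have ha'w : a' \in w ++ flatten R.
  move: ha'D; rewrite /D /= !inE => /orP[/eqP e|/orP[/eqP e|]] //.
  - by move: na'; rewrite e eqxx.
  - by move: ea'; rewrite e (letter_eta b) => -[e1 e2]; move: hpq; rewrite /p /q e1 eqxx.
have hb'w : b' \in w ++ flatten R.
  move: hb'D; rewrite /D /= !inE => /orP[/eqP e|/orP[/eqP e|]] //.
  - by move: eb'; rewrite e (letter_eta a) => -[e1 e2]; move: hpq; rewrite /p /q e1 eqxx.
  - by move: nb'; rewrite e eqxx.
have hab' : a' != b'.
  by apply/eqP => e; move: ea'; rewrite e eb' => -[e1]; move: hpq; rewrite /p /q e1 eqxx.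
have [sg [W1 [W2 [W3 [R' hiso]]]]] := locA ha'w hb'w hab'.
set m := (sumn (ids D)).+1.
have hpm : p < m by rewrite /m ltnS le_sumn // in_ids.
have hqm : q < m by rewrite /m ltnS le_sumn // in_ids.
have hperm : perm_eq (flatten D) ([:: a'; b'; a; b] ++ flatten [:: W1, W2, W3 & R']).
  apply: (perm_trans (iso_perm_flat (hiso [:: a; b]))).
  exact: (flatten_F sg [:: a'] [:: b'] [:: a; b] W1 W2 W3 R').
have hUC := UC_gen (lsign a) (lsign b) hpq hpm hqm.
have hf : freshL [:: p, q, m, m.+1, m.+2, m.+3 & iota m.+4 n] [:: W1, W2, W3 & R'].
  have hqp : (q == p) = false by rewrite eq_sym (negbTE hpq).
  move=> c; rewrite !inE => /orP[/eqP->|/orP[/eqP->|hc]].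
  - apply: (rest_fresh wf hperm (in_ids haD)).
    by rewrite /= ea' eb' /= -/p -/q eqxx hqp.
  - apply: (rest_fresh wf hperm (in_ids hbD)).
    by rewrite /= ea' eb' /= -/p -/q eqxx (negbTE hpq).
  - by apply: (rest_big hperm); move: hc; rewrite /m; apply: big_iota.
have := hUC n sg W1 W2 W3 R' hf.
have -> : [:: O p (lsign a)] = [:: a'] by rewrite ea' ha.
have -> : [:: O q (lsign b)] = [:: b'] by rewrite eb' hb.
have -> : [:: U p (lsign a); U q (lsign b)] = [:: a; b].
  by rewrite /U /p /q [in RHS](letter_eta a) [in RHS](letter_eta b) (negbTE ha) (negbTE hb).
have -> : [:: U q (lsign b); U p (lsign a)] = [:: b; a].
  by rewrite /U /p /q [in RHS](letter_eta a) [in RHS](letter_eta b) (negbTE ha) (negbTE hb).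
move=> h; apply: (E_iso (hiso [:: a; b]) (hiso [:: b; a])); exact: h.
Qed.

Lemma sub1 d c m n : {subset [:: d, c, m, m.+1 & iota m.+2 n] <= [:: d, c & iota m n.+4]}.
Proof. move=> x; rewrite !inE !mem_iota; lia. Qed.
Lemma sub1' d c m n : {subset [:: c, d, m, m.+1 & iota m.+2 n] <= [:: d, c & iota m n.+4]}.
Proof. move=> x; rewrite !inE !mem_iota; lia. Qed.
Lemma sub2 d c m n : {subset [:: d, c, m, m.+1, m.+2, m.+3 & iota m.+4 n] <= [:: d, c & iota m n.+4]}.
Proof. move=> x; rewrite !inE !mem_iota; lia. Qed.

Lemma swap_move n c d m oa ol sa sl : d != c -> d < m -> c < m ->
  Move n [:: d, c & iota m n.+4] [:: (d, ~~ oa, sa)] [:: (c, ol, sl)] [:: (d, oa, sa); (c, ~~ ol, sl)]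
    [:: (d, ~~ oa, sa)] [:: (c, ol, sl)] [:: (c, ~~ ol, sl); (d, oa, sa)].
Proof.
move=> hdc hdm hcm.
have hcd : c != d by rewrite eq_sym.
case: oa; case: ol => /=.
- (* a over, l over: b under *)
  have h := Move_swap12 (Move_swap23 (Move_sym (@MIX n c d m sl sa hcd hcm hdm))).
  exact: (Move_weak (@sub1' d c m n) h).
- (* a over, l under: b over : OC *)
  have h := Move_swap23 (Move_swap12 (@Move_OC n [::] (d, true, sa) (c, true, sl) isT isT)).
  have := Move_emb (u1 := [::]) (v1 := [:: (d, false, sa)]) (u2 := [::]) (v2 := [:: (c, false, sl)]) (u3 := [::]) (v3 := [::]) h.
  move=> /(_ (freshL_nil _)) /= h'.
  by apply: (Move_weak _ h'); move=> x; rewrite in_nil.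
- (* a under, l over: b under: UC *)
  have h := @UC_gen n d c m sa sl hdc hdm hcm.
  exact: (Move_weak (@sub2 d c m n) h).
- (* a under, l under: b over: MIX *)
  have h := Move_swap23 (@MIX n d c m sa sl hdc hdm hcm).
  exact: (Move_weak (@sub1 d c m n) h).
Qed.

Lemma locB (l a' : letter) u v : a' \in u ++ v ->
  exists sg W1 W2 W3, forall s, iso [:: l :: u ++ s ++ v] (F sg [:: a'] [:: l] s W1 W2 W3 [::]).
Proof.
rewrite mem_cat => /orP[] h.
- case/split_seq: h => u1 [u2 ->].
  exists 1, u2, u1, v => s.
  by iso_solve2 [:: [:: l]; u1; [:: a']; u2; s; v] ([::] : gauss).
- case/split_seq: h => v1 [v2 ->].
  exists 0, v2, u, v1 => s.
  by iso_solve2 [:: [:: l]; u; s; v1; [:: a']; v2] ([::] : gauss).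
Qed.

Lemma swap_adj n l u a b v : wf_gauss [:: l :: u ++ a :: b :: v] -> lid b = lid l -> lid a != lid l ->
  Vn_equiv n [:: l :: u ++ a :: b :: v] [:: l :: u ++ b :: a :: v].
Proof.
move=> wf ebl hal.
set D := [:: l :: u ++ a :: b :: v].
have hlD : l \in flatten D by rewrite /D /= inE eqxx.
have haD : a \in flatten D by rewrite /D /= !inE !mem_cat !inE eqxx !orbT.
have hbD : b \in flatten D by rewrite /D /= !inE !mem_cat !inE eqxx !orbT.
have [a' [ha'D ea' na']] := partner wf haD.
set c := lid l; set d := lid a.
have hdc : d != c by [].
have [hob hsb] : lover b = ~~ lover l /\ lsign b = lsign l.
  case: (wf c (in_ids hlD)) => h1 h2 hs; split; last first.
    by apply: hs => //.
  move: h1 h2; rewrite /D /= cats0 !count_cat /= ebl eqxx.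
  by case: (lover l); case: (lover b) => /=; lia.
have ha'uv : a' \in u ++ v.
  rewrite mem_cat.
  move: ha'D; rewrite /D /= cats0 inE mem_cat !inE => /orP[/eqP e|/orP[hu|/orP[/eqP e|/orP[/eqP e|hv]]]];
   rewrite ?hu ?hv ?orbT //.
  - by move: hal; rewrite -e ea' /lid /= eqxx.
  - by move: na'; rewrite e eqxx.
  - by move: hal; rewrite -ebl -e ea' /lid /= eqxx.
have [sg [W1 [W2 [W3 hiso]]]] := locB l ha'uv.
set m := (sumn (ids D)).+1.
have hdm : d < m by rewrite /m ltnS le_sumn // in_ids.
have hcm : c < m by rewrite /m ltnS le_sumn // in_ids.
have hperm : perm_eq (flatten D) ([:: a'; l; a; b] ++ flatten [:: W1, W2, W3 & [::]]).
  apply: (perm_trans (iso_perm_flat (hiso [:: a; b]))).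
  exact: (flatten_F sg [:: a'] [:: l] [:: a; b] W1 W2 W3 [::]).
have h := @swap_move n c d m (lover a) (lover l) (lsign a) (lsign l) hdc hdm hcm.
have hf : freshL [:: d, c & iota m n.+4] [:: W1, W2, W3 & [::]].
  have hcd : (c == d) = false by rewrite eq_sym (negbTE hdc).
  move=> x; rewrite !inE => /orP[/eqP->|/orP[/eqP->|hx]].
  - apply: (rest_fresh wf hperm (in_ids haD)).
    by rewrite /= ea' /= -/d -/c ebl -/c eqxx hcd.
  - apply: (rest_fresh wf hperm (in_ids hlD)).
    by rewrite /= ea' /= -/d -/c ebl -/c eqxx (negbTE hdc).
  - apply: (rest_big hperm); move: hx; rewrite /m mem_iota; lia.
have h' := h sg W1 W2 W3 [::] hf.
have e1 : (d, ~~ lover a, lsign a) = a' by rewrite ea'.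
have e2 : (c, lover l, lsign l) = l by rewrite [RHS]letter_eta.
have e3 : (d, lover a, lsign a) = a by rewrite [RHS]letter_eta.
have e4 : (c, ~~ lover l, lsign l) = b by rewrite [RHS]letter_eta hob hsb ebl.
rewrite e1 e2 e3 e4 in h'.
exact: (E_iso (hiso [:: a; b]) (hiso [:: b; a]) h').
Qed.

Lemma wf_perm D D' : perm_eq (flatten D) (flatten D') -> wf_gauss D -> wf_gauss D'.
Proof.
move=> hp wf c hc.
have hc' : c \in ids D by rewrite /ids (perm_mem (perm_map lid hp)).
case: (wf c hc') => h1 h2 hs; split.
- by rewrite -(permP hp).
- by rewrite -(permP hp).
- by move=> l1 l2; rewrite -!(perm_mem hp); exact: hs.
Qed.

Lemma pair_props l X b Y : wf_gauss [:: l :: X ++ b :: Y] -> lid b = lid l ->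
  lover b = ~~ lover l /\ lsign b = lsign l.
Proof.
move=> wf ebl.
have hlD : l \in flatten [:: l :: X ++ b :: Y] by rewrite /= inE eqxx.
case: (wf (lid l) (in_ids hlD)) => h1 h2 hs; split; last first.
  by apply: hs => //; rewrite /= cats0 inE mem_cat inE eqxx !orbT.
move: h1 h2; rewrite /= cats0 !count_cat /= ebl eqxx.
by case: (lover l); case: (lover b) => /=; lia.
Qed.

Lemma bring n l u b v : wf_gauss [:: l :: u ++ b :: v] -> lid b = lid l -> lid l \notin map lid u ->
  Vn_equiv n [:: l :: u ++ b :: v] [:: l :: b :: u ++ v].
Proof.
elim/last_ind: u v => [|u0 a ih] v wf ebl hu; first exact: E_refl.
rewrite !cat_rcons.
have hal : lid a != lid l.
  by apply/eqP => e; move: hu; rewrite map_rcons mem_rcons inE e eqxx.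
rewrite cat_rcons in wf.
apply: (E_trans (swap_adj n wf ebl hal)).
have wf' : wf_gauss [:: l :: u0 ++ b :: a :: v].
  apply: (wf_perm _ wf); rewrite /= !cats0 perm_cons perm_cat2l.
  exact: perm_sw2.
have hu0 : lid l \notin map lid u0.
  by apply/negP => h; move: hu; rewrite map_rcons mem_rcons inE h orbT.
exact: (ih (a :: v) wf' ebl hu0).
Qed.

Lemma wf_remove l b (u v : seq letter) : wf_gauss [:: l :: u ++ b :: v] -> lid b = lid l ->
  wf_gauss [:: u ++ v].
Proof.
move=> wf ebl c hc.
have hp : perm_eq (flatten [:: l :: u ++ b :: v]) ([:: l; b] ++ (u ++ v)).
  rewrite /= !cats0 perm_cons -cat1s perm_catCA; exact: perm_refl.
have hc' : c \in ids [:: l :: u ++ b :: v].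
  rewrite /ids (perm_mem (perm_map lid hp)) map_cat mem_cat; apply/orP; right.
  by move: hc; rewrite /ids /= cats0.
have hcl : lid l != c.
  apply/eqP => e.
  have : lid l \notin ids [:: u ++ v].
    apply: (@rest_fresh _ [:: l; b] _ _ wf); last by rewrite /= ebl eqxx.
      by move: hp; rewrite /= !cats0.
    by apply: in_ids; rewrite /= inE eqxx.
  by rewrite e hc.
case: (wf c hc') => h1 h2 hs; split.
- move: h1; rewrite (permP hp) count_cat /= ebl (negbTE hcl) /= cats0; by [].
- move: h2; rewrite (permP hp) count_cat /= ebl (negbTE hcl) /= cats0; by [].
- move=> l1 l2 hl1 hl2; apply: hs; rewrite (perm_mem hp) mem_cat; [move: hl1|move: hl2];
  by rewrite /= cats0 => ->; rewrite orbT.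
Qed.

Lemma partB n w : wf_gauss [:: w] -> Vn_equiv n [:: w] unknot.
Proof.
move: {2}(size w) (leqnn (size w)) => k; elim: k w => [|k ih] w.
  by rewrite leqn0 => /nilP -> _; exact: E_refl.
case: w => [|l w'] hs wf; first exact: E_refl.
set c := lid l.
have hlD : l \in flatten [:: l :: w'] by rewrite /= inE eqxx.
have [l' [hl'D el' nl']] := partner wf hlD.
have hl'w : l' \in w' by move: hl'D; rewrite /= cats0 inE (negbTE nl').
have hhas : has (fun x => lid x == c) w' by apply/hasP; exists l' => //; rewrite el'.
set i := find (fun x => lid x == c) w'.
have hi : i < size w' by rewrite -has_find.
set b := nth l w' i.
have ebl : lid b = lid l by apply/eqP; exact: (nth_find l hhas).
set u := take i w'; set v := drop i.+1 w'.
have ew : w' = u ++ b :: v by rewrite /u /v /b -drop_nth // cat_take_drop.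
have hu : lid l \notin map lid u.
  apply/negP => /mapP[x hx ex].
  have hxi : index x u < i.
    by move: hx; rewrite -index_mem /u size_take hi.
  have := @before_find _ l (fun x => lid x == c) w' (index x u) hxi.
  rewrite -(nth_take _ hxi) nth_index //= -/u.
  by rewrite -ex eqxx.
rewrite ew in wf hs *.
apply: (E_trans (bring n wf ebl hu)).
have [hob hsb] := pair_props wf ebl.
have hfr : fresh c [:: u ++ v].
  apply: (@rest_fresh _ [:: l; b] _ _ wf); last by rewrite /= ebl eqxx.
    rewrite /= !cats0 perm_cons -cat1s perm_catCA; exact: perm_refl.
  by apply: in_ids; rewrite /= inE eqxx.
have e1 := E_ws n (@ws_R1 (u ++ v) [::] c (lover l) (lsign l) hfr).
have ebl' : b = (c, ~~ lover l, lsign l) by rewrite [LHS]letter_eta ebl hob hsb.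
rewrite -letter_eta -ebl' /= in e1.
apply: (E_trans (E_sym e1)).
apply: ih; last exact: wf_remove wf ebl.
by move: hs; rewrite /= size_cat /= size_cat; lia.
Qed.


Theorem proposition3p4 (n : nat) : 0 < n ->
  (forall D D' : gauss, wf_gauss D -> UC_step D D' -> Vn_equiv n D D') /\
  (forall D : gauss, wf_gauss D -> size D = 1 -> Vn_equiv n D unknot).
Proof.
move=> _; split.
- by move=> D D' wf h; exact: partA wf h.
- move=> [|w [|w' D]] //= wf _; exact: partB wf.
Qed.
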